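(* Let $\mathbb{S}=[0,1]$ with $0$ and $1$ identified, and let $H:\mathbb{S}\times\mathbb{R}\times\mathbb{R}\to\mathbb{R}$ be $C^\infty$ with $\frac{\partial^2H}{\partial p^2}>0$, $p\mapsto H(x,p,u)$ superlinear for each $(x,u)$, and $|\frac{\partial H}{\partial u}|\le\kappa$ for some $\kappa>0$. Let $u_0$ be a viscosity solution of $H(x,u'(x),u(x))=0$ on $\mathbb{S}$ such that $\frac{\partial H}{\partial p}(x,u_0'(x),u_0(x))\ne0$ at every differentiability point $x$ of $u_0$. Set $B(x)=\frac{\partial H}{\partial p}(x,u_0'(x),u_0(x))$, $$\mu=\frac{\int_0^1\frac{\partial H}{\partial u}(\tau,u_0'(\tau),u_0(\tau))B(\tau)^{-1}d\tau}{\int_0^1B(\tau)^{-1}d\tau},\qquad \rho(x)=\exp\left\{\int_0^x\frac{\mu-\frac{\partial H}{\partial u}(\tau,u_0'(\tau),u_0(\tau))}{B(\tau)}\,d\tau\right\}.$$ Assume $\mu<0$. For given $\Theta\in(\mu,0)$ set $w_\epsilon(x,t)=u_0(x)-\epsilon\rho(x)e^{-\Theta t}$. Then there exists $\tilde\epsilon_0=\tilde\epsilon_0(\Theta)>0$ such that: (1) for $\epsilon\in(0,\tilde\epsilon_0]$, $\partial_tw_\epsilon(x,t)+H(x,\partial_xw_\epsilon(x,t),w_\epsilon(x,t))\ge0$ for all $(x,t)\in\mathbb{S}\times\left[0,\frac{\ln\tilde\epsilon_0-\ln|\epsilon|}{-\Theta}\right]$; (2) for $\epsilon\in[-\tilde\epsilon_0,0)$,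 $\partial_tw_\epsilon(x,t)+H(x,\partial_xw_\epsilon(x,t),w_\epsilon(x,t))\le0$ for all $(x,t)\in\mathbb{S}\times\left[0,\frac{\ln\tilde\epsilon_0-\ln|\epsilon|}{-\Theta}\right]$.
   Context: It is known that under these assumptions $u_0$ is of class $C^\infty$, so $B$ is smooth and nowhere zero, $\rho$ is a smooth positive function on $\mathbb{S}$, and $w_\epsilon$ is $C^\infty$. *)

(* Defs.v *)
From Stdlib Require Import Reals Lra List.
From Coquelicot Require Import Coquelicot.
Open Scope R_scope.

(* The circle S = [0,1] with 0 ~ 1 is modelled by 1-periodic functions on R. *)
Definition periodic1 (f : R -> R) : Prop := forall x, f (x + 1) = f x.
Definition periodic1_3 (H : R -> R -> R -> R) : Prop :=
  forall x p u, H (x + 1) p u = H x p u.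

Definition pd (i : nat) (f : R -> R -> R -> R) : R -> R -> R -> R :=
  match i with
  | 0%nat => fun x p u => Derive (fun y => f y p u) x
  | 1%nat => fun x p u => Derive (fun q => f x q u) p
  | _ => fun x p u => Derive (fun v => f x p v) u
  end.

Definition ex_pd (i : nat) (f : R -> R -> R -> R) (x p u : R) : Prop :=
  match i with
  | 0%nat => ex_derive (fun y => f y p u) x
  | 1%nat => ex_derive (fun q => f x q u) p
  | _ => ex_derive (fun v => f x p v) u
  end.

(* Iterated partial derivative along a list of directions (0 = x, 1 = p, 2 = u). *)
Fixpoint dpart (l : list nat) (f : R -> R -> R -> R) : R -> R -> R -> R :=
  match l with
  | nil => f
  | i :: l' => pd i (dpart l' f)
  end.

Definition cont3 (f : R -> R -> R -> R) : Prop :=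
  forall x p u eps, 0 < eps -> exists delta, 0 < delta /\
    forall x' p' u', Rabs (x' - x) < delta -> Rabs (p' - p) < delta ->
      Rabs (u' - u) < delta -> Rabs (f x' p' u' - f x p u) < eps.

Definition smooth3 (f : R -> R -> R -> R) : Prop :=
  (forall l i x p u, (i < 3)%nat -> ex_pd i (dpart l f) x p u) /\
  (forall l, cont3 (dpart l f)).

Definition Hp (H : R -> R -> R -> R) := pd 1 H.
Definition Hu (H : R -> R -> R -> R) := pd 2 H.
Definition Hpp (H : R -> R -> R -> R) := pd 1 (pd 1 H).

Definition superlinear (H : R -> R -> R -> R) : Prop :=
  forall x u M, exists R0, forall p, R0 <= Rabs p -> M * Rabs p <= H x p u.

Definition C1 (phi : R -> R) : Prop :=
  (forall x, ex_derive phi x) /\ (forall x, continuous (Derive phi) x).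

Definition loc_max (f : R -> R) (x : R) : Prop :=
  exists r, 0 < r /\ forall y, Rabs (y - x) < r -> f y <= f x.
Definition loc_min (f : R -> R) (x : R) : Prop :=
  exists r, 0 < r /\ forall y, Rabs (y - x) < r -> f x <= f y.

Definition visc_sub (H : R -> R -> R -> R) (u : R -> R) : Prop :=
  forall phi x, C1 phi -> loc_max (fun y => u y - phi y) x ->
    H x (Derive phi x) (u x) <= 0.
Definition visc_super (H : R -> R -> R -> R) (u : R -> R) : Prop :=
  forall phi x, C1 phi -> loc_min (fun y => u y - phi y) x ->
    0 <= H x (Derive phi x) (u x).
Definition visc_sol (H : R -> R -> R -> R) (u : R -> R) : Prop :=
  periodic1 u /\ (forall x, continuous u x) /\ visc_sub H u /\ visc_super H u.

Definition Bf (H : R -> R -> R -> R) (u0 : R -> R) (x : R) : R :=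
  Hp H x (Derive u0 x) (u0 x).

Definition muf (H : R -> R -> R -> R) (u0 : R -> R) : R :=
  RInt (fun t => Hu H t (Derive u0 t) (u0 t) / Bf H u0 t) 0 1 /
  RInt (fun t => / Bf H u0 t) 0 1.

Definition rhof (H : R -> R -> R -> R) (u0 : R -> R) (x : R) : R :=
  exp (RInt (fun t => (muf H u0 - Hu H t (Derive u0 t) (u0 t)) / Bf H u0 t) 0 x).

Definition wf (H : R -> R -> R -> R) (u0 : R -> R) (Theta eps x t : R) : R :=
  u0 x - eps * rhof H u0 x * exp (- Theta * t).

(* Main.v *)
Require Import Defs.
From Stdlib Require Import Reals Lra Lia List Classical.
From Coquelicot Require Import Coquelicot.
Open Scope R_scope.

Definition ctn (g : R -> R) (t : R) : Prop :=
  forall e, 0 < e -> exists d, 0 < d /\ forall s, Rabs (s - t) < d -> Rabs (g s - g t) < e.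

Lemma continuous_ctn g t : continuous g t -> ctn g t.
Proof.
  intros Hc e He.
  apply continuity_pt_filterlim in Hc.
  destruct (Hc e He) as [d [Hd Hd']].
  exists d; split; auto. intros s Hs.
  destruct (Req_dec s t) as [->|Hne].
  - rewrite Rminus_eq_0, Rabs_R0; auto.
  - apply Hd'. split. split; [exact I| auto]. exact Hs.
Qed.

Lemma ctn_continuity_pt g t : ctn g t -> continuity_pt g t.
Proof.
  intros Hc e He. destruct (Hc e He) as [d [Hd Hd']].
  exists d; split; auto. intros s [_ Hs]. apply Hd'. exact Hs.
Qed.

Lemma ctn_pos g t : ctn g t -> 0 < g t -> exists d, 0 < d /\ forall s, Rabs (s - t) < d -> 0 < g s.
Proof.
  intros Hc Hp. destruct (Hc (g t) Hp) as [d [Hd Hd']]. exists d; split; auto.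
  intros s Hs. specialize (Hd' s Hs). apply Rabs_def2 in Hd'. lra.
Qed.

Lemma ctn_neg g t : ctn g t -> g t < 0 -> exists d, 0 < d /\ forall s, Rabs (s - t) < d -> g s < 0.
Proof.
  intros Hc Hp. destruct (Hc (- g t)) as [d [Hd Hd']]. lra. exists d; split; auto.
  intros s Hs. specialize (Hd' s Hs). apply Rabs_def2 in Hd'. lra.
Qed.

Lemma cont3_comp f g1 g2 g3 t : cont3 f -> ctn g1 t -> ctn g2 t -> ctn g3 t ->
  ctn (fun s => f (g1 s) (g2 s) (g3 s)) t.
Proof.
  intros Hf H1 H2 H3 e He.
  destruct (Hf (g1 t) (g2 t) (g3 t) e He) as [d [Hd Hd']].
  destruct (H1 d Hd) as [d1 [Hd1 Hd1']].
  destruct (H2 d Hd) as [d2 [Hd2 Hd2']].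
  destruct (H3 d Hd) as [d3 [Hd3 Hd3']].
  exists (Rmin d1 (Rmin d2 d3)); split.
  apply Rmin_pos; auto; apply Rmin_pos; auto.
  intros s Hs. apply Hd'.
  apply Hd1'. eapply Rlt_le_trans; [exact Hs|apply Rmin_l].
  apply Hd2'. eapply Rlt_le_trans; [exact Hs|]. eapply Rle_trans; [apply Rmin_r|apply Rmin_l].
  apply Hd3'. eapply Rlt_le_trans; [exact Hs|]. eapply Rle_trans; [apply Rmin_r|apply Rmin_r].
Qed.

Lemma ctn_const c t : ctn (fun _ => c) t.
Proof. intros e He. exists 1; split; [lra|]. intros s _. rewrite Rminus_eq_0, Rabs_R0; auto. Qed.

Lemma ctn_id t : ctn (fun s => s) t.
Proof. intros e He. exists e; split; auto. Qed.

Definition quad (k s c K : R) : R -> R := fun t => k + s * (t - c) + K * ((t - c) * (t - c)).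

Lemma quad_is_derive k s c K t : is_derive (quad k s c K) t (s + 2 * K * (t - c)).
Proof.
  unfold quad. auto_derive; auto. ring.
Qed.

Lemma quad_Derive k s c K t : Derive (quad k s c K) t = s + 2 * K * (t - c).
Proof. apply is_derive_unique, quad_is_derive. Qed.

Lemma quad_C1 k s c K : Defs.C1 (quad k s c K).
Proof.
  split.
  - intros x. eexists. apply quad_is_derive.
  - intros x. apply (continuous_ext (fun t => s + 2 * K * (t - c)) (Derive (quad k s c K))).
    intros t. symmetry. apply quad_Derive.
    apply continuity_pt_filterlim. apply derivable_continuous_pt.
    apply derivable_pt_plus. apply derivable_pt_const.
    apply derivable_pt_mult. apply derivable_pt_const.
    apply derivable_pt_minus. apply derivable_pt_id. apply derivable_pt_const.
Qed.

Lemma interior_max f lo hi t :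
  (forall c, lo <= c <= hi -> continuity_pt f c) -> lo <= t <= hi ->
  f lo < f t -> f hi < f t ->
  exists z, lo < z < hi /\ loc_max f z.
Proof.
  intros Hc Ht H1 H2.
  destruct (continuity_ab_maj f lo hi) as [z [Hz Hz']]. lra. auto.
  assert (f t <= f z) by (apply Hz; lra).
  assert (lo < z < hi).
  { split; destruct Hz' as [A B]; destruct A as [A|A]; try destruct B as [B|B]; subst; lra. }
  exists z; split; auto.
  exists (Rmin (z - lo) (hi - z)); split. apply Rmin_pos; lra.
  intros y Hy. apply Hz.
  apply Rabs_def2 in Hy. destruct Hy as [A B].
  pose proof (Rmin_l (z - lo) (hi - z)). pose proof (Rmin_r (z - lo) (hi - z)). lra.
Qed.

Lemma interior_min f lo hi t :
  (forall c, lo <= c <= hi -> continuity_pt f c) -> lo <= t <= hi ->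
  f t < f lo -> f t < f hi ->
  exists z, lo < z < hi /\ loc_min f z.
Proof.
  intros Hc Ht H1 H2.
  destruct (continuity_ab_min f lo hi) as [z [Hz Hz']]. lra. auto.
  assert (f z <= f t) by (apply Hz; lra).
  assert (lo < z < hi).
  { split; destruct Hz' as [A B]; destruct A as [A|A]; try destruct B as [B|B]; subst; lra. }
  exists z; split; auto.
  exists (Rmin (z - lo) (hi - z)); split. apply Rmin_pos; lra.
  intros y Hy. apply Hz.
  apply Rabs_def2 in Hy. destruct Hy as [A B].
  pose proof (Rmin_l (z - lo) (hi - z)). pose proof (Rmin_r (z - lo) (hi - z)). lra.
Qed.

Lemma Rabs_le_inv a b : Rabs a <= b -> - b <= a <= b.
Proof. intros Hh. pose proof (Rle_abs a). pose proof (Rle_abs (-a)). rewrite Rabs_Ropp in H0. lra. Qed.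

Lemma cover (Q : R -> R -> Prop) lo hi : lo <= hi ->
 (forall k k' y, k <= k' -> Q k y -> Q k' y) ->
 (forall y, lo <= y <= hi -> exists k r, 0 < r /\ forall y', Rabs (y' - y) < r -> Q k y') ->
 exists k, forall y, lo <= y <= hi -> Q k y.
Proof.
  intros Hlh Hmono Hloc.
  set (S := fun t => lo <= t <= hi /\ exists k, forall y, lo <= y <= t -> Q k y).
  assert (S0 : S lo).
  { split. lra. destruct (Hloc lo ltac:(lra)) as [k [r [Hr Hk]]]. exists k.
    intros y Hy. apply Hk. replace (y - lo) with 0 by lra. rewrite Rabs_R0; auto. }
  destruct (completeness S) as [s [Hub Hlub]].
  { exists hi. intros t [Ht _]. lra. }
  { exists lo; auto. }
  assert (Hs1 : lo <= s) by (apply Hub; auto).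
  assert (Hs2 : s <= hi) by (apply Hlub; intros t [Ht _]; lra).
  destruct (Hloc s ltac:(lra)) as [ks [r [Hr Hks]]].
  assert (Ht : exists t, S t /\ s - r < t).
  { apply NNPP. intros Hn.
    assert (s <= s - r). { apply Hlub. intros t Ht. destruct (Rle_or_lt t (s - r)); auto.
      exfalso. apply Hn. exists t; auto. }
    lra. }
  destruct Ht as [t [[Ht1 [kt Hkt]] Ht2]].
  set (t' := Rmin (s + r / 2) hi).
  assert (St' : S t').
  { split. split. unfold t'. apply Rmin_glb; lra. apply Rmin_r.
    exists (Rmax kt ks). intros y Hy.
    destruct (Rle_or_lt y t) as [Hyt|Hyt].
    - apply Hmono with kt. apply Rmax_l. apply Hkt. lra.
    - apply Hmono with ks. apply Rmax_r. apply Hks.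
      assert (t <= s) by (apply Hub; split; [lra| exists kt; auto]).
      assert (t' <= s + r/2) by apply Rmin_l.
      apply Rabs_def1; lra. }
  assert (t' <= s) by (apply Hub; auto).
  assert (t' = hi).
  { unfold t' in *. revert H. unfold Rmin. destruct (Rle_dec (s + r/2) hi); intros; lra. }
  exists (Rmax kt ks). rewrite <- H0.
  destruct St' as [_ [k Hk]].
  intros y Hy.
  destruct (Rle_or_lt y t) as [Hyt|Hyt].
  - apply Hmono with kt. apply Rmax_l. apply Hkt. lra.
  - apply Hmono with ks. apply Rmax_r. apply Hks.
    assert (t <= s) by (apply Hub; split; [lra| exists kt; auto]).
    assert (t' <= s + r/2) by apply Rmin_l.
    apply Rabs_def1; lra.
Qed.
Section Main.
Variable H : R -> R -> R -> R.
Variable u : R -> R.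
Hypothesis Hsm : smooth3 H.
Hypothesis Hper : periodic1_3 H.
Hypothesis Hconv : forall x p w, 0 < Hpp H x p w.
Hypothesis Hsl : superlinear H.
Hypothesis Husol : visc_sol H u.
Hypothesis HB : forall x, ex_derive u x -> Hp H x (Derive u x) (u x) <> 0.

Lemma H_deriv_p x p w : is_derive (fun q => H x q w) p (Hp H x p w).
Proof.
  pose proof (proj1 Hsm nil 1%nat x p w) as E. simpl in E.
  apply Derive_correct. apply E. lia.
Qed.

Lemma Hp_deriv_p x p w : is_derive (fun q => Hp H x q w) p (Hpp H x p w).
Proof.
  pose proof (proj1 Hsm (1%nat :: nil) 1%nat x p w) as E. simpl in E.
  apply Derive_correct. apply E. lia.
Qed.

Lemma H_deriv_u x p w : is_derive (fun v => H x p v) w (Hu H x p w).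
Proof.
  pose proof (proj1 Hsm nil 2%nat x p w) as E. simpl in E.
  apply Derive_correct. apply E. lia.
Qed.

Lemma H_cont3 : cont3 H.
Proof. exact (proj2 Hsm nil). Qed.
Lemma Hp_cont3 : cont3 (Hp H).
Proof. exact (proj2 Hsm (1%nat :: nil)). Qed.
Lemma Hu_cont3 : cont3 (Hu H).
Proof. exact (proj2 Hsm (2%nat :: nil)). Qed.

Lemma Hp_strict_mono x w p q : p < q -> Hp H x p w < Hp H x q w.
Proof.
  intros Hpq.
  destruct (MVT_cor2 (fun q => Hp H x q w) (fun q => Hpp H x q w) p q Hpq) as [c [Hc _]].
  intros c _. apply is_derive_Reals. apply Hp_deriv_p.
  pose proof (Hconv x c w). nra.
Qed.

Lemma H_MVT_p x w p q : p < q -> exists c, p < c < q /\ H x q w - H x p w = Hp H x c w * (q - p).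
Proof.
  intros Hpq.
  destruct (MVT_cor2 (fun q => H x q w) (fun q => Hp H x q w) p q Hpq) as [c [Hc Hc2]].
  intros c _. apply is_derive_Reals. apply H_deriv_p.
  exists c; split; auto.
Qed.

Lemma H_strict_conv x w a b t : a < t < b -> H x t w < Rmax (H x a w) (H x b w).
Proof.
  intros Ht.
  destruct (H_MVT_p x w a t) as [c1 [Hc1 E1]]. lra.
  destruct (H_MVT_p x w t b) as [c2 [Hc2 E2]]. lra.
  pose proof (Hp_strict_mono x w c1 c2 ltac:(lra)).
  pose proof (Rmax_l (H x a w) (H x b w)). pose proof (Rmax_r (H x a w) (H x b w)).
  destruct (Rlt_or_le (H x t w) (Rmax (H x a w) (H x b w))) as [|Hge]; auto.
  exfalso.
  assert (0 <= Hp H x c1 w * (t - a)) by lra.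
  assert (Hp H x c2 w * (b - t) <= 0) by lra.
  assert (0 <= Hp H x c1 w).
  { destruct (Rlt_or_le (Hp H x c1 w) 0); [nra|lra]. }
  assert (Hp H x c2 w <= 0).
  { destruct (Rlt_or_le 0 (Hp H x c2 w)); [nra|lra]. }
  lra.
Qed.

Lemma H_conv x w a b t : a <= t <= b -> H x t w <= Rmax (H x a w) (H x b w).
Proof.
  intros Ht.
  destruct (Req_dec t a) as [->|]. apply Rmax_l.
  destruct (Req_dec t b) as [->|]. apply Rmax_r.
  left. apply H_strict_conv. lra.
Qed.

Lemma u_ctn t : ctn u t.
Proof. apply continuous_ctn. apply (proj1 (proj2 Husol)). Qed.

Lemma H_ctn_u q t : ctn (fun s => H s q (u s)) t.
Proof. apply (cont3_comp H (fun s => s) (fun _ => q) u); auto using H_cont3, ctn_id, ctn_const, u_ctn. Qed.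
Lemma Hp_ctn_u q t : ctn (fun s => Hp H s q (u s)) t.
Proof. apply (cont3_comp (Hp H) (fun s => s) (fun _ => q) u); auto using Hp_cont3, ctn_id, ctn_const, u_ctn. Qed.
Lemma H_ctn_p x w p : ctn (fun q => H x q w) p.
Proof. apply (cont3_comp H (fun _ => x) (fun s => s) (fun _ => w)); auto using H_cont3, ctn_id, ctn_const. Qed.
Lemma Hp_ctn_p x w p : ctn (fun q => Hp H x q w) p.
Proof. apply (cont3_comp (Hp H) (fun _ => x) (fun s => s) (fun _ => w)); auto using Hp_cont3, ctn_id, ctn_const. Qed.

Lemma visc_max k s c K z : loc_max (fun y => u y - quad k s c K y) z ->
  H z (s + 2 * K * (z - c)) (u z) <= 0.
Proof.
  intros Hm. rewrite <- quad_Derive with (k := k).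
  apply (proj1 (proj2 (proj2 Husol))). apply quad_C1. exact Hm.
Qed.

Lemma visc_min k s c K z : loc_min (fun y => u y - quad k s c K y) z ->
  0 <= H z (s + 2 * K * (z - c)) (u z).
Proof.
  intros Hm. rewrite <- quad_Derive with (k := k).
  apply (proj2 (proj2 (proj2 Husol))). apply quad_C1. exact Hm.
Qed.

Lemma v_cont k s c K t : continuity_pt (fun y => u y - quad k s c K y) t.
Proof.
  apply continuity_pt_minus. apply ctn_continuity_pt, u_ctn.
  apply derivable_continuous_pt. exists (s + 2 * K * (t - c)).
  apply is_derive_Reals, quad_is_derive.
Qed.

Definition Qs (k z : R) : Prop :=
  0 < H z k (u z) /\ 0 < Hp H z k (u z) /\ 0 < H z (-k) (u z) /\ Hp H z (-k) (u z) < 0.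

Lemma Qs_mono k k' z : k <= k' -> Qs k z -> Qs k' z.
Proof.
  intros Hk [A [B [C D]]].
  destruct (Req_dec k k') as [<-|Hne]. repeat split; auto.
  assert (k < k') by lra.
  destruct (H_MVT_p z (u z) k k') as [c1 [Hc1 E1]]; auto.
  destruct (H_MVT_p z (u z) (-k') (-k)) as [c2 [Hc2 E2]]. lra.
  pose proof (Hp_strict_mono z (u z) k c1 ltac:(lra)).
  pose proof (Hp_strict_mono z (u z) k k' ltac:(lra)).
  pose proof (Hp_strict_mono z (u z) c2 (-k) ltac:(lra)).
  pose proof (Hp_strict_mono z (u z) (-k') (-k) ltac:(lra)).
  repeat split; nra.
Qed.

Lemma Qs_pos k z p : Qs k z -> k <= Rabs p -> 0 < H z p (u z).
Proof.
  intros Hq Hp.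
  destruct (Rle_or_lt 0 p).
  - rewrite Rabs_right in Hp by lra. apply (Qs_mono k p z Hp Hq).
  - rewrite Rabs_left in Hp by lra. pose proof (Qs_mono k (-p) z Hp Hq) as [_ [_ [C _]]].
    rewrite Ropp_involutive in C. exact C.
Qed.

Lemma Qs_local z0 : exists k r, 0 < r /\ forall z, Rabs (z - z0) < r -> Qs k z.
Proof.
  destruct (Hsl z0 (u z0) 1) as [R0 HR0].
  set (k := Rmax R0 (Rabs (H z0 0 (u z0)) + 1)).
  assert (Hk1 : R0 <= k) by apply Rmax_l.
  assert (Hk2 : Rabs (H z0 0 (u z0)) + 1 <= k) by apply Rmax_r.
  pose proof (Rabs_pos (H z0 0 (u z0))).
  assert (Hkp : 0 < k) by lra.
  assert (A : 0 < H z0 k (u z0)).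
  { pose proof (HR0 k). rewrite Rabs_right in H1 by lra. specialize (H1 Hk1). lra. }
  assert (C : 0 < H z0 (-k) (u z0)).
  { pose proof (HR0 (-k)). rewrite Rabs_left in H1 by lra. specialize (H1 ltac:(lra)). lra. }
  assert (B : 0 < Hp H z0 k (u z0)).
  { destruct (H_MVT_p z0 (u z0) 0 k Hkp) as [c [Hc E]].
    pose proof (Hp_strict_mono z0 (u z0) c k ltac:(lra)).
    pose proof (HR0 k). rewrite Rabs_right in H2 by lra. specialize (H2 Hk1).
    pose proof (Rle_abs (H z0 0 (u z0))). 
    assert (0 < Hp H z0 c (u z0) * k) by lra.
    assert (0 < Hp H z0 c (u z0)). { destruct (Rlt_or_le 0 (Hp H z0 c (u z0))); auto. nra. }
    lra. }
  assert (D : Hp H z0 (-k) (u z0) < 0).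
  { destruct (H_MVT_p z0 (u z0) (-k) 0 ltac:(lra)) as [c [Hc E]].
    pose proof (Hp_strict_mono z0 (u z0) (-k) c ltac:(lra)).
    pose proof (HR0 (-k)). rewrite Rabs_left in H2 by lra. specialize (H2 ltac:(lra)).
    pose proof (Rle_abs (H z0 0 (u z0))). 
    assert (Hp H z0 c (u z0) * k < 0) by lra.
    assert (Hp H z0 c (u z0) < 0). { destruct (Rlt_or_le (Hp H z0 c (u z0)) 0); auto. nra. }
    lra. }
  destruct (ctn_pos _ _ (H_ctn_u k z0) A) as [d1 [Hd1 E1]].
  destruct (ctn_pos _ _ (Hp_ctn_u k z0) B) as [d2 [Hd2 E2]].
  destruct (ctn_pos _ _ (H_ctn_u (-k) z0) C) as [d3 [Hd3 E3]].
  destruct (ctn_neg _ _ (Hp_ctn_u (-k) z0) D) as [d4 [Hd4 E4]].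
  exists k, (Rmin (Rmin d1 d2) (Rmin d3 d4)). split.
  repeat apply Rmin_pos; auto.
  intros z Hz.
  pose proof (Rmin_l (Rmin d1 d2) (Rmin d3 d4)). pose proof (Rmin_r (Rmin d1 d2) (Rmin d3 d4)).
  pose proof (Rmin_l d1 d2). pose proof (Rmin_r d1 d2). pose proof (Rmin_l d3 d4). pose proof (Rmin_r d3 d4).
  repeat split; [apply E1|apply E2|apply E3|apply E4]; lra.
Qed.

Lemma Qs_unif lo hi : lo <= hi -> exists k, forall z, lo <= z <= hi -> Qs k z.
Proof.
  intros Hlh. apply cover; auto. apply Qs_mono.
  intros y _. apply Qs_local.
Qed.

Lemma u_bounded lo hi : lo <= hi -> exists M, forall z, lo <= z <= hi -> Rabs (u z) <= M.
Proof.
  intros Hlh.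
  destruct (continuity_ab_maj u lo hi Hlh) as [a [Ha _]].
  intros c _. apply ctn_continuity_pt, u_ctn.
  destruct (continuity_ab_min u lo hi Hlh) as [b [Hb _]].
  intros c _. apply ctn_continuity_pt, u_ctn.
  exists (Rmax (Rabs (u a)) (Rabs (u b))). intros z Hz.
  specialize (Ha z Hz). specialize (Hb z Hz).
  pose proof (Rmax_l (Rabs (u a)) (Rabs (u b))). pose proof (Rmax_r (Rabs (u a)) (Rabs (u b))).
  pose proof (Rle_abs (u a)). pose proof (Rle_abs (- u b)). rewrite Rabs_Ropp in H3.
  apply Rabs_le. lra.
Qed.

Lemma v_cont_all k s c K lo hi : forall t, lo <= t <= hi -> continuity_pt (fun y => u y - quad k s c K y) t.
Proof. intros; apply v_cont. Qed.

Lemma u_lip_loc x : exists L, 0 < L /\ forall a b, x - 1/2 <= a <= b -> b <= x + 1/2 ->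
  Rabs (u b - u a) <= L * (b - a).
Proof.
  destruct (Qs_unif (x - 3) (x + 3)) as [R HR]. lra.
  destruct (u_bounded (x - 3) (x + 3)) as [M HM]. lra.
  assert (HM0 : 0 <= M). { specialize (HM x ltac:(lra)). pose proof (Rabs_pos (u x)). lra. }
  set (L := Rabs R + 4 * M + 1).
  assert (HLR : R <= L). { pose proof (Rle_abs R). unfold L; lra. }
  exists L. split. unfold L; pose proof (Rabs_pos R); lra.
  intros a b Hab Hb.
  destruct (Rle_or_lt (Rabs (u b - u a)) (L * (b - a))) as [|Hgt]; auto. exfalso.
  assert (Hlt : a < b). { destruct (Req_dec a b) as [->|]. rewrite !Rminus_eq_0 in Hgt. rewrite Rabs_R0 in Hgt. lra. lra. }
  pose proof (HM a ltac:(lra)) as Ma. pose proof (HM b ltac:(lra)) as Mb.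
  pose proof (HM (a + 2) ltac:(lra)) as Ma2. pose proof (HM (b - 2) ltac:(lra)) as Mb2.
  apply Rabs_le_inv in Ma. apply Rabs_le_inv in Mb. apply Rabs_le_inv in Ma2. apply Rabs_le_inv in Mb2.
  assert (HL4 : 4 * M + 1 <= L) by (unfold L; pose proof (Rabs_pos R); lra).
  assert (E1 : L <= L * (a + 2 - b)) by nra.
  assert (E2 : L <= L * (a - (b - 2))) by nra.
  destruct (Rle_or_lt 0 (u b - u a)) as [Hs|Hs].
  - rewrite Rabs_right in Hgt by lra.
    destruct (interior_max (fun y => u y - quad 0 L 0 0 y) a (a + 2) b) as [z [Hz Hmax]].
    apply v_cont_all. lra. unfold quad; lra. unfold quad; lra.
    apply visc_max in Hmax. replace (L + 2 * 0 * (z - 0)) with L in Hmax by ring.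
    assert (0 < H z L (u z)). { apply (Qs_pos R). apply HR. lra. rewrite Rabs_right; lra. }
    lra.
  - rewrite Rabs_left in Hgt by lra.
    destruct (interior_max (fun y => u y - quad 0 (-L) 0 0 y) (b - 2) b a) as [z [Hz Hmax]].
    apply v_cont_all. lra. unfold quad; lra. unfold quad; lra.
    apply visc_max in Hmax. replace (-L + 2 * 0 * (z - 0)) with (-L) in Hmax by ring.
    assert (0 < H z (-L) (u z)). { apply (Qs_pos R). apply HR. lra. rewrite Rabs_left; lra. }
    lra.
Qed.

Definition RD (x a : R) : Prop := forall e, 0 < e -> exists r, 0 < r /\
  forall y, x < y < x + r -> Rabs (u y - u x - a * (y - x)) <= e * (y - x).
Definition LD (x b : R) : Prop := forall e, 0 < e -> exists r, 0 < r /\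
  forall y, x - r < y < x -> Rabs (u y - u x - b * (y - x)) <= e * (x - y).

Lemma osc_max x p d t1 t2 t3 : t1 < t2 < t3 -> x - d < t1 -> t3 < x + d ->
  u t1 - u x - p * (t1 - x) < 0 -> 0 < u t2 - u x - p * (t2 - x) -> u t3 - u x - p * (t3 - x) < 0 ->
  exists z, Rabs (z - x) < d /\ H z p (u z) <= 0.
Proof.
  intros Ht Hd1 Hd2 V1 V2 V3.
  destruct (interior_max (fun y => u y - quad (u x) p x 0 y) t1 t3 t2) as [z [Hz Hm]].
  apply v_cont_all. lra. unfold quad; lra. unfold quad; lra.
  exists z. split. apply Rabs_def1; lra.
  apply visc_max in Hm. replace (p + 2 * 0 * (z - x)) with p in Hm by ring. exact Hm.
Qed.

Lemma osc_min x p d t1 t2 t3 : t1 < t2 < t3 -> x - d < t1 -> t3 < x + d ->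
  0 < u t1 - u x - p * (t1 - x) -> u t2 - u x - p * (t2 - x) < 0 -> 0 < u t3 - u x - p * (t3 - x) ->
  exists z, Rabs (z - x) < d /\ 0 <= H z p (u z).
Proof.
  intros Ht Hd1 Hd2 V1 V2 V3.
  destruct (interior_min (fun y => u y - quad (u x) p x 0 y) t1 t3 t2) as [z [Hz Hm]].
  apply v_cont_all. lra. unfold quad; lra. unfold quad; lra.
  exists z. split. apply Rabs_def1; lra.
  apply visc_min in Hm. replace (p + 2 * 0 * (z - x)) with p in Hm by ring. exact Hm.
Qed.

Lemma osc_right x p :
  (forall r, 0 < r -> exists y, x < y < x + r /\ 0 < u y - u x - p * (y - x)) ->
  (forall r, 0 < r -> exists y, x < y < x + r /\ u y - u x - p * (y - x) < 0) ->
  H x p (u x) = 0.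
Proof.
  intros Pos Neg. apply Rle_antisym.
  - destruct (Rle_or_lt (H x p (u x)) 0) as [|Hlt]; auto. exfalso.
    destruct (ctn_pos _ _ (H_ctn_u p x) Hlt) as [d [Hd Hd']].
    destruct (Neg d Hd) as [ya [Ha Va]].
    destruct (Pos (ya - x) ltac:(lra)) as [yb [Hb Vb]].
    destruct (Neg (yb - x) ltac:(lra)) as [yc [Hc Vc]].
    destruct (osc_max x p d yc yb ya) as [z [Hz Hz']]; try lra.
    specialize (Hd' z Hz). lra.
  - destruct (Rle_or_lt 0 (H x p (u x))) as [|Hlt]; auto. exfalso.
    destruct (ctn_neg _ _ (H_ctn_u p x) Hlt) as [d [Hd Hd']].
    destruct (Pos d Hd) as [ya [Ha Va]].
    destruct (Neg (ya - x) ltac:(lra)) as [yb [Hb Vb]].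
    destruct (Pos (yb - x) ltac:(lra)) as [yc [Hc Vc]].
    destruct (osc_min x p d yc yb ya) as [z [Hz Hz']]; try lra.
    specialize (Hd' z Hz). lra.
Qed.

Lemma osc_left x p :
  (forall r, 0 < r -> exists y, x - r < y < x /\ 0 < u y - u x - p * (y - x)) ->
  (forall r, 0 < r -> exists y, x - r < y < x /\ u y - u x - p * (y - x) < 0) ->
  H x p (u x) = 0.
Proof.
  intros Pos Neg. apply Rle_antisym.
  - destruct (Rle_or_lt (H x p (u x)) 0) as [|Hlt]; auto. exfalso.
    destruct (ctn_pos _ _ (H_ctn_u p x) Hlt) as [d [Hd Hd']].
    destruct (Neg d Hd) as [ya [Ha Va]].
    destruct (Pos (x - ya) ltac:(lra)) as [yb [Hb Vb]].
    destruct (Neg (x - yb) ltac:(lra)) as [yc [Hc Vc]].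
    destruct (osc_max x p d ya yb yc) as [z [Hz Hz']]; try lra.
    specialize (Hd' z Hz). lra.
  - destruct (Rle_or_lt 0 (H x p (u x))) as [|Hlt]; auto. exfalso.
    destruct (ctn_neg _ _ (H_ctn_u p x) Hlt) as [d [Hd Hd']].
    destruct (Pos d Hd) as [ya [Ha Va]].
    destruct (Neg (x - ya) ltac:(lra)) as [yb [Hb Vb]].
    destruct (Pos (x - yb) ltac:(lra)) as [yc [Hc Vc]].
    destruct (osc_min x p d ya yb yc) as [z [Hz Hz']]; try lra.
    specialize (Hd' z Hz). lra.
Qed.

Lemma H_zero_interval x w a e : 0 < e -> (forall p, a < p < a + e -> H x p w = 0) -> False.
Proof.
  intros He Hz.
  pose proof (H_strict_conv x w (a + e/4) (a + 3*e/4) (a + e/2) ltac:(lra)) as K.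
  rewrite (Hz (a + e/4)), (Hz (a + e/2)), (Hz (a + 3*e/4)) in K by lra.
  rewrite Rmax_left in K by lra. lra.
Qed.

Lemma RD_exists x : exists a, RD x a.
Proof.
  destruct (u_lip_loc x) as [L [HL Hlip]].
  set (A := fun p => exists r, 0 < r /\ forall y, x < y < x + r -> p * (y - x) <= u y - u x).
  assert (Hbnd : forall p, A p -> p <= L).
  { intros p [r [Hr Hp]].
    set (y := x + Rmin r (1/2) / 2).
    assert (0 < Rmin r (1/2)) by (apply Rmin_pos; lra).
    pose proof (Rmin_l r (1/2)). pose proof (Rmin_r r (1/2)).
    specialize (Hp y ltac:(unfold y; lra)).
    specialize (Hlip x y ltac:(unfold y; lra) ltac:(unfold y; lra)).
    apply Rabs_le_inv in Hlip.
    assert (p * (y - x) <= L * (y - x)) by lra.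
    assert (0 < y - x) by (unfold y; lra).
    nra. }
  destruct (completeness A) as [a [Hub Hlub]].
  { exists L. intros p Hp. apply Hbnd; auto. }
  { exists (-L). exists (1/2). split. lra. intros y Hy.
    specialize (Hlip x y ltac:(lra) ltac:(lra)). apply Rabs_le_inv in Hlip. lra. }
  exists a. intros e He.
  assert (Hlow : exists p r, a - e < p /\ 0 < r /\ forall y, x < y < x + r -> p * (y - x) <= u y - u x).
  { apply NNPP. intros Hn.
    assert (a <= a - e).
    { apply Hlub. intros p [r [Hr Hp]]. destruct (Rle_or_lt p (a - e)); auto.
      exfalso. apply Hn. exists p, r. auto. }
    lra. }
  destruct Hlow as [p [r1 [Hp [Hr1 Hr1']]]].
  assert (Hup : exists r, 0 < r /\ forall y, x < y < x + r -> u y - u x <= (a + e) * (y - x)).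
  { apply NNPP. intros Hn. apply (H_zero_interval x (u x) a e He).
    intros q Hq. apply osc_right.
    - intros r Hr. apply NNPP. intros Hn2. apply Hn. exists r. split; auto.
      intros y Hy. destruct (Rle_or_lt (u y - u x) ((a + e) * (y - x))) as [|Hgt]; auto.
      exfalso. apply Hn2. exists y. split; auto. nra.
    - intros r Hr. apply NNPP. intros Hn2.
      assert (A q). { exists r. split; auto. intros y Hy.
        destruct (Rle_or_lt (q * (y - x)) (u y - u x)) as [|Hgt]; auto.
        exfalso. apply Hn2. exists y. split; auto. lra. }
      specialize (Hub q H0). lra. }
  destruct Hup as [r2 [Hr2 Hr2']].
  exists (Rmin r1 r2). split. apply Rmin_pos; auto.
  intros y Hy. pose proof (Rmin_l r1 r2). pose proof (Rmin_r r1 r2).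
  specialize (Hr1' y ltac:(lra)). specialize (Hr2' y ltac:(lra)).
  apply Rabs_le. split; nra.
Qed.

Lemma LD_exists x : exists b, LD x b.
Proof.
  destruct (u_lip_loc x) as [L [HL Hlip]].
  set (A := fun p => exists r, 0 < r /\ forall y, x - r < y < x -> u y - u x <= p * (y - x)).
  assert (Hbnd : forall p, A p -> p <= L).
  { intros p [r [Hr Hp]].
    set (y := x - Rmin r (1/2) / 2).
    assert (0 < Rmin r (1/2)) by (apply Rmin_pos; lra).
    pose proof (Rmin_l r (1/2)). pose proof (Rmin_r r (1/2)).
    specialize (Hp y ltac:(unfold y; lra)).
    specialize (Hlip y x ltac:(unfold y; lra) ltac:(unfold y; lra)).
    apply Rabs_le_inv in Hlip.
    assert (0 < x - y) by (unfold y; lra).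
    nra. }
  destruct (completeness A) as [b [Hub Hlub]].
  { exists L. intros p Hp. apply Hbnd; auto. }
  { exists (-L). exists (1/2). split. lra. intros y Hy.
    specialize (Hlip y x ltac:(lra) ltac:(lra)). apply Rabs_le_inv in Hlip. lra. }
  exists b. intros e He.
  assert (Hlow : exists p r, b - e < p /\ 0 < r /\ forall y, x - r < y < x -> u y - u x <= p * (y - x)).
  { apply NNPP. intros Hn.
    assert (b <= b - e).
    { apply Hlub. intros p [r [Hr Hp]]. destruct (Rle_or_lt p (b - e)); auto.
      exfalso. apply Hn. exists p, r. auto. }
    lra. }
  destruct Hlow as [p [r1 [Hp [Hr1 Hr1']]]].
  assert (Hup : exists r, 0 < r /\ forall y, x - r < y < x -> (b + e) * (y - x) <= u y - u x).
  { apply NNPP. intros Hn. apply (H_zero_interval x (u x) b e He).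
    intros q Hq. apply osc_left.
    - intros r Hr. apply NNPP. intros Hn2.
      assert (A q). { exists r. split; auto. intros y Hy.
        destruct (Rle_or_lt (u y - u x) (q * (y - x))) as [|Hgt]; auto.
        exfalso. apply Hn2. exists y. split; auto. lra. }
      specialize (Hub q H0). lra.
    - intros r Hr. apply NNPP. intros Hn2. apply Hn. exists r. split; auto.
      intros y Hy. destruct (Rle_or_lt ((b + e) * (y - x)) (u y - u x)) as [|Hgt]; auto.
      exfalso. apply Hn2. exists y. split; auto. nra. }
  destruct Hup as [r2 [Hr2 Hr2']].
  exists (Rmin r1 r2). split. apply Rmin_pos; auto.
  intros y Hy. pose proof (Rmin_l r1 r2). pose proof (Rmin_r r1 r2).
  specialize (Hr1' y ltac:(lra)). specialize (Hr2' y ltac:(lra)).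
  apply Rabs_le. split; nra.
Qed.

Lemma H_near x a : forall e, 0 < e -> exists d, 0 < d /\ forall z q, Rabs (z - x) < d -> Rabs (q - a) < d ->
  Rabs (H z q (u z) - H x a (u x)) < e.
Proof.
  intros e He. destruct (H_cont3 x a (u x) e He) as [d1 [Hd1 Hd1']].
  destruct (u_ctn x d1 Hd1) as [d2 [Hd2 Hd2']].
  exists (Rmin d1 d2). split. apply Rmin_pos; auto.
  intros z q Hz Hq. pose proof (Rmin_l d1 d2). pose proof (Rmin_r d1 d2).
  apply Hd1'; try lra. apply Hd2'. lra.
Qed.

Lemma approx_ge x a : (forall d, 0 < d -> exists z q, Rabs (z - x) < d /\ Rabs (q - a) < d /\ 0 <= H z q (u z)) ->
  0 <= H x a (u x).
Proof.
  intros Hap. destruct (Rle_or_lt 0 (H x a (u x))) as [|Hlt]; auto. exfalso.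
  destruct (H_near x a (- H x a (u x)) ltac:(lra)) as [d [Hd Hd']].
  destruct (Hap d Hd) as [z [q [Hz [Hq Hh]]]].
  specialize (Hd' z q Hz Hq). apply Rabs_def2 in Hd'. lra.
Qed.

Lemma approx_le x a : (forall d, 0 < d -> exists z q, Rabs (z - x) < d /\ Rabs (q - a) < d /\ H z q (u z) <= 0) ->
  H x a (u x) <= 0.
Proof.
  intros Hap. destruct (Rle_or_lt (H x a (u x)) 0) as [|Hlt]; auto. exfalso.
  destruct (H_near x a (H x a (u x)) ltac:(lra)) as [d [Hd Hd']].
  destruct (Hap d Hd) as [z [q [Hz [Hq Hh]]]].
  specialize (Hd' z q Hz Hq). apply Rabs_def2 in Hd'. lra.
Qed.

Lemma T0 c h s eta : 0 < h -> 0 < eta ->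
  (forall t, c - h <= t <= c + h -> Rabs (u t - u c - s * (t - c)) <= eta * h) ->
  (exists z q, Rabs (z - c) < h /\ Rabs (q - s) <= 8 * eta /\ 0 <= H z q (u z)) /\
  (exists z q, Rabs (z - c) < h /\ Rabs (q - s) <= 8 * eta /\ H z q (u z) <= 0).
Proof.
  intros Hh He Hb.
  set (K := 4 * eta / h).
  assert (HKh : K * (h * h) = 4 * eta * h) by (unfold K; field; lra).
  assert (HK : 0 < K) by (unfold K; apply Rdiv_lt_0_compat; lra).
  assert (HK2 : K * h = 4 * eta) by (unfold K; field; lra).
  pose proof (Hb (c - h) ltac:(lra)) as B1. pose proof (Hb (c + h) ltac:(lra)) as B2.
  apply Rabs_le_inv in B1. apply Rabs_le_inv in B2.
  split.
  - destruct (interior_min (fun y => u y - quad (u c) s c (-K) y) (c - h) (c + h) c) as [z [Hz Hm]].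
    apply v_cont_all. lra.
    unfold quad. replace (c - h - c) with (-h) by ring. replace (c - c) with 0 by ring. nra.
    unfold quad. replace (c + h - c) with h by ring. replace (c - c) with 0 by ring. nra.
    apply visc_min in Hm. exists z, (s + 2 * - K * (z - c)). split. apply Rabs_def1; lra.
    split; auto.
    replace (s + 2 * - K * (z - c) - s) with (- (2 * K * (z - c))) by ring. rewrite Rabs_Ropp.
    rewrite Rabs_mult. rewrite (Rabs_right (2 * K)) by lra.
    assert (Rabs (z - c) <= h) by (apply Rabs_le; lra).
    nra.
  - destruct (interior_max (fun y => u y - quad (u c) s c K y) (c - h) (c + h) c) as [z [Hz Hm]].
    apply v_cont_all. lra.
    unfold quad. replace (c - h - c) with (-h) by ring. replace (c - c) with 0 by ring. nra.
    unfold quad. replace (c + h - c) with h by ring. replace (c - c) with 0 by ring. nra.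
    apply visc_max in Hm. exists z, (s + 2 * K * (z - c)). split. apply Rabs_def1; lra.
    split; auto.
    replace (s + 2 * K * (z - c) - s) with (2 * K * (z - c)) by ring.
    rewrite Rabs_mult. rewrite (Rabs_right (2 * K)) by lra.
    assert (Rabs (z - c) <= h) by (apply Rabs_le; lra).
    nra.
Qed.

Lemma RD_root x a : RD x a -> H x a (u x) = 0.
Proof.
  intros Hrd.
  assert (G : forall d, 0 < d -> exists h eta, 0 < h /\ 0 < eta /\ 2 * h < d /\ 8 * eta < d /\
     forall t, (x + h) - h <= t <= (x + h) + h -> Rabs (u t - u (x + h) - a * (t - (x + h))) <= eta * h).
  { intros d Hd. set (eta := d / 16). assert (Heta : 0 < eta) by (unfold eta; lra).
    destruct (Hrd (eta / 3) ltac:(unfold eta; lra)) as [r [Hr Hr']].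
    set (h := Rmin (r / 4) (d / 4)).
    assert (0 < h) by (apply Rmin_pos; lra).
    assert (h <= r/4) by apply Rmin_l. assert (h <= d/4) by apply Rmin_r.
    exists h, eta. repeat split; try lra. unfold eta; lra.
    intros t Ht.
    pose proof (Hr' (x + h) ltac:(lra)) as Bc. 
    replace (u t - u (x + h) - a * (t - (x + h))) with
      ((u t - u x - a * (t - x)) - (u (x + h) - u x - a * (x + h - x))) by ring.
    eapply Rle_trans. apply Rabs_triang. rewrite Rabs_Ropp.
    destruct (Req_dec t x) as [->|Htx].
    - replace (u x - u x - a * (x - x)) with 0 by ring. rewrite Rabs_R0.
      replace (x + h - x) with h in * by ring. nra.
    - pose proof (Hr' t ltac:(lra)) as Bt. nra. }
  apply Rle_antisym.
  - apply approx_le. intros d Hd.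
    destruct (G d Hd) as [h [eta [Hh [He [H1 [H2 Hb]]]]]].
    destruct (proj2 (T0 (x + h) h a eta Hh He Hb)) as [z [q [Hz [Hq Hv]]]].
    exists z, q. repeat split; auto.
    apply Rabs_def2 in Hz. apply Rabs_def1; lra. lra.
  - apply approx_ge. intros d Hd.
    destruct (G d Hd) as [h [eta [Hh [He [H1 [H2 Hb]]]]]].
    destruct (proj1 (T0 (x + h) h a eta Hh He Hb)) as [z [q [Hz [Hq Hv]]]].
    exists z, q. repeat split; auto.
    apply Rabs_def2 in Hz. apply Rabs_def1; lra. lra.
Qed.

Lemma LD_root x b : LD x b -> H x b (u x) = 0.
Proof.
  intros Hrd.
  assert (G : forall d, 0 < d -> exists h eta, 0 < h /\ 0 < eta /\ 2 * h < d /\ 8 * eta < d /\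
     forall t, (x - h) - h <= t <= (x - h) + h -> Rabs (u t - u (x - h) - b * (t - (x - h))) <= eta * h).
  { intros d Hd. set (eta := d / 16). assert (Heta : 0 < eta) by (unfold eta; lra).
    destruct (Hrd (eta / 3) ltac:(unfold eta; lra)) as [r [Hr Hr']].
    set (h := Rmin (r / 4) (d / 4)).
    assert (0 < h) by (apply Rmin_pos; lra).
    assert (h <= r/4) by apply Rmin_l. assert (h <= d/4) by apply Rmin_r.
    exists h, eta. repeat split; try lra. unfold eta; lra.
    intros t Ht.
    pose proof (Hr' (x - h) ltac:(lra)) as Bc. 
    replace (u t - u (x - h) - b * (t - (x - h))) with
      ((u t - u x - b * (t - x)) - (u (x - h) - u x - b * (x - h - x))) by ring.
    eapply Rle_trans. apply Rabs_triang. rewrite Rabs_Ropp.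
    destruct (Req_dec t x) as [->|Htx].
    - replace (u x - u x - b * (x - x)) with 0 by ring. rewrite Rabs_R0.
      replace (x - (x - h)) with h in Bc by ring. nra.
    - pose proof (Hr' t ltac:(lra)) as Bt. nra. }
  apply Rle_antisym.
  - apply approx_le. intros d Hd.
    destruct (G d Hd) as [h [eta [Hh [He [H1 [H2 Hb]]]]]].
    destruct (proj2 (T0 (x - h) h b eta Hh He Hb)) as [z [q [Hz [Hq Hv]]]].
    exists z, q. repeat split; auto.
    apply Rabs_def2 in Hz. apply Rabs_def1; lra. lra.
  - apply approx_ge. intros d Hd.
    destruct (G d Hd) as [h [eta [Hh [He [H1 [H2 Hb]]]]]].
    destruct (proj1 (T0 (x - h) h b eta Hh He Hb)) as [z [q [Hz [Hq Hv]]]].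
    exists z, q. repeat split; auto.
    apply Rabs_def2 in Hz. apply Rabs_def1; lra. lra.
Qed.

Lemma RD_unique x a a' : RD x a -> RD x a' -> a = a'.
Proof.
  intros H1 H2. apply NNPP. intros Hne.
  assert (He : 0 < Rabs (a - a') / 4). { apply Rdiv_lt_0_compat. apply Rabs_pos_lt. lra. lra. }
  destruct (H1 _ He) as [r1 [Hr1 Hr1']]. destruct (H2 _ He) as [r2 [Hr2 Hr2']].
  set (y := x + Rmin r1 r2 / 2).
  assert (0 < Rmin r1 r2) by (apply Rmin_pos; auto).
  assert (Rmin r1 r2 <= r1) by apply Rmin_l. assert (Rmin r1 r2 <= r2) by apply Rmin_r.
  specialize (Hr1' y ltac:(unfold y; lra)). specialize (Hr2' y ltac:(unfold y; lra)).
  assert (K : Rabs ((a - a') * (y - x)) <= Rabs (a - a') / 2 * (y - x)).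
  { replace ((a - a') * (y - x)) with ((u y - u x - a' * (y - x)) - (u y - u x - a * (y - x))) by ring.
    eapply Rle_trans. apply Rabs_triang. rewrite Rabs_Ropp. lra. }
  rewrite Rabs_mult in K. rewrite (Rabs_right (y - x)) in K by (unfold y; lra).
  assert (0 < y - x) by (unfold y; lra). pose proof (Rabs_pos (a - a')). nra.
Qed.

Lemma LD_unique x a a' : LD x a -> LD x a' -> a = a'.
Proof.
  intros H1 H2. apply NNPP. intros Hne.
  assert (He : 0 < Rabs (a - a') / 4). { apply Rdiv_lt_0_compat. apply Rabs_pos_lt. lra. lra. }
  destruct (H1 _ He) as [r1 [Hr1 Hr1']]. destruct (H2 _ He) as [r2 [Hr2 Hr2']].
  set (y := x - Rmin r1 r2 / 2).
  assert (0 < Rmin r1 r2) by (apply Rmin_pos; auto).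
  assert (Rmin r1 r2 <= r1) by apply Rmin_l. assert (Rmin r1 r2 <= r2) by apply Rmin_r.
  specialize (Hr1' y ltac:(unfold y; lra)). specialize (Hr2' y ltac:(unfold y; lra)).
  assert (K : Rabs ((a - a') * (y - x)) <= Rabs (a - a') / 2 * (x - y)).
  { replace ((a - a') * (y - x)) with ((u y - u x - a' * (y - x)) - (u y - u x - a * (y - x))) by ring.
    eapply Rle_trans. apply Rabs_triang. rewrite Rabs_Ropp. lra. }
  rewrite Rabs_mult in K. rewrite (Rabs_left (y - x)) in K by (unfold y; lra).
  assert (0 < x - y) by (unfold y; lra). pose proof (Rabs_pos (a - a')). nra.
Qed.

Lemma two_roots x w a b : H x a w = 0 -> H x b w = 0 -> a < b -> Hp H x a w < 0 /\ 0 < Hp H x b w.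
Proof.
  intros Ha Hb Hab. destruct (H_MVT_p x w a b Hab) as [c [Hc E]].
  rewrite Ha, Hb in E. assert (Hp H x c w = 0).
  { assert (K : Hp H x c w * (b - a) = 0) by lra. apply Rmult_integral in K. destruct K; auto. lra. }
  pose proof (Hp_strict_mono x w a c ltac:(lra)). pose proof (Hp_strict_mono x w c b ltac:(lra)). lra.
Qed.

Lemma no_convex_kink x a b : RD x a -> LD x b -> a <= b.
Proof.
  intros Hr Hl. destruct (Rle_or_lt a b) as [|Hlt]; auto. exfalso.
  set (p := (a + b) / 2).
  assert (Hge : 0 <= H x p (u x)).
  { destruct (Hr ((a - b) / 2) ltac:(lra)) as [r1 [Hr1 Hr1']].
    destruct (Hl ((a - b) / 2) ltac:(lra)) as [r2 [Hr2 Hr2']].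
    replace p with (p + 2 * 0 * (x - x)) by ring.
    apply (visc_min (u x) p x 0 x).
    exists (Rmin r1 r2). split. apply Rmin_pos; auto.
    intros y Hy. assert (Rmin r1 r2 <= r1) by apply Rmin_l. assert (Rmin r1 r2 <= r2) by apply Rmin_r.
    apply Rabs_def2 in Hy. unfold quad.
    destruct (Rtotal_order y x) as [Hyx|[Hyx|Hyx]].
    - specialize (Hr2' y ltac:(lra)). apply Rabs_le_inv in Hr2'. unfold p. nra.
    - subst. lra.
    - specialize (Hr1' y ltac:(lra)). apply Rabs_le_inv in Hr1'. unfold p. nra. }
  pose proof (H_strict_conv x (u x) b a p ltac:(unfold p; lra)) as K.
  rewrite (RD_root x a Hr), (LD_root x b Hl) in K. rewrite Rmax_left in K by lra. lra.
Qed.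

Lemma RD_LD_derive x a : RD x a -> LD x a -> is_derive u x a.
Proof.
  intros Hr Hl. apply is_derive_Reals. intros eps Heps.
  destruct (Hr (eps / 2) ltac:(lra)) as [r1 [Hr1 Hr1']].
  destruct (Hl (eps / 2) ltac:(lra)) as [r2 [Hr2 Hr2']].
  assert (K0 : 0 < Rmin r1 r2) by (apply Rmin_pos; auto).
  exists (mkposreal _ K0). intros h Hh Hhd. simpl in Hhd.
  assert (Rmin r1 r2 <= r1) by apply Rmin_l. assert (Rmin r1 r2 <= r2) by apply Rmin_r.
  apply Rabs_def2 in Hhd.
  replace ((u (x + h) - u x) / h - a) with ((u (x + h) - u x - a * (x + h - x)) / h) by (field; auto).
  unfold Rdiv. rewrite Rabs_mult, Rabs_inv.
  destruct (Rtotal_order h 0) as [Hn|[Hz|Hp]].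
  - specialize (Hr2' (x + h) ltac:(lra)). rewrite (Rabs_left h) by lra.
    apply Rmult_lt_reg_r with (- h). lra. rewrite Rmult_assoc, Rinv_l by lra. nra.
  - contradiction.
  - specialize (Hr1' (x + h) ltac:(lra)). rewrite (Rabs_right h) by lra.
    apply Rmult_lt_reg_r with h. lra. rewrite Rmult_assoc, Rinv_l by lra. nra.
Qed.

Lemma Hp_RD_LD x a b : RD x a -> LD x b ->
  (a = b /\ Hp H x a (u x) <> 0) \/ (a < b /\ Hp H x a (u x) < 0 /\ 0 < Hp H x b (u x)).
Proof.
  intros Hr Hl. destruct (no_convex_kink x a b Hr Hl) as [Hlt|Heq].
  - right. split; auto. apply two_roots; auto. apply RD_root; auto. apply LD_root; auto.
  - left. subst. split; auto.
    pose proof (RD_LD_derive x b Hr Hl) as D.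
    pose proof (HB x (ex_intro _ b D)) as K. rewrite (is_derive_unique _ _ _ D) in K. exact K.
Qed.

Lemma below_neg z w q m : H z q w = 0 -> H z m w < 0 -> q <= m -> Hp H z q w < 0.
Proof.
  intros Hq Hm Hqm. destruct (Req_dec q m) as [->|Hne]. lra.
  destruct (H_MVT_p z w q m ltac:(lra)) as [c [Hc E]].
  pose proof (Hp_strict_mono z w q c ltac:(lra)).
  assert (Hp H z c w < 0). { destruct (Rlt_or_le (Hp H z c w) 0); auto. nra. }
  lra.
Qed.

Lemma above_pos z w q m : H z q w = 0 -> H z m w < 0 -> m <= q -> 0 < Hp H z q w.
Proof.
  intros Hq Hm Hqm. destruct (Req_dec q m) as [->|Hne]. lra.
  destruct (H_MVT_p z w m q ltac:(lra)) as [c [Hc E]].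
  pose proof (Hp_strict_mono z w c q ltac:(lra)).
  assert (0 < Hp H z c w). { destruct (Rlt_or_le 0 (Hp H z c w)); auto. nra. }
  lra.
Qed.

Definition vm x m := fun t => u t - quad (u x) m x 0 t.
Lemma vm_eq x m t : vm x m t = u t - u x - m * (t - x).
Proof. unfold vm, quad. ring. Qed.

Lemma min_contra x m lo hi t1 t2 : lo <= t1 <= hi -> lo <= t2 <= hi ->
  vm x m t1 < vm x m lo -> vm x m t2 < vm x m hi ->
  (forall z, lo < z < hi -> H z m (u z) < 0) -> False.
Proof.
  intros Ht1 Ht2 V1 V2 Hneg.
  assert (Hex : exists t, lo <= t <= hi /\ vm x m t < vm x m lo /\ vm x m t < vm x m hi).
  { destruct (Rle_or_lt (vm x m t1) (vm x m t2)).
    - exists t1. repeat split; try lra.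
    - exists t2. repeat split; try lra. }
  destruct Hex as [t [Ht [A B]]].
  destruct (interior_min (vm x m) lo hi t) as [z [Hz Hm]]; auto.
  apply v_cont_all.
  apply visc_min in Hm. replace (m + 2 * 0 * (z - x)) with m in Hm by ring.
  specialize (Hneg z Hz). lra.
Qed.

Lemma prop_right x a : RD x a -> Hp H x a (u x) < 0 ->
  exists r, 0 < r /\ forall z, x < z < x + r -> forall a' b', RD z a' -> LD z b' ->
    Hp H z a' (u z) < 0 /\ Hp H z b' (u z) < 0.
Proof.
  intros Hrd Hneg.
  pose proof (RD_root x a Hrd) as Hroot.
  destruct (ctn_neg _ _ (Hp_ctn_p x (u x) a) Hneg) as [d [Hd Hd']].
  set (m := a + d / 2).
  assert (Hm : H x m (u x) < 0).
  { destruct (H_MVT_p x (u x) a m ltac:(unfold m; lra)) as [c [Hc E]].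
    assert (Hp H x c (u x) < 0) by (apply Hd'; apply Rabs_def1; unfold m in Hc; lra).
    assert (0 < m - a) by (unfold m; lra). nra. }
  destruct (ctn_neg _ _ (H_ctn_u m x) Hm) as [r1 [Hr1 Hr1']].
  destruct (Hrd ((m - a) / 2) ltac:(unfold m; lra)) as [r2 [Hr2 Hr2']].
  exists r1. split; auto. intros z Hz a' b' Ha' Hb'.
  assert (Hneg1 : forall t, x < t < x + r1 -> H t m (u t) < 0).
  { intros t Ht. apply Hr1'. apply Rabs_def1; lra. }
  set (y0 := x + Rmin r2 (z - x) / 2).
  assert (0 < Rmin r2 (z - x)) by (apply Rmin_pos; lra).
  assert (Rmin r2 (z - x) <= r2) by apply Rmin_l. assert (Rmin r2 (z - x) <= z - x) by apply Rmin_r.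
  assert (Vy0 : vm x m y0 < 0).
  { rewrite vm_eq. specialize (Hr2' y0 ltac:(unfold y0; lra)). apply Rabs_le_inv in Hr2'.
    assert (0 < y0 - x) by (unfold y0; lra). unfold m in *. nra. }
  assert (Vx : vm x m x = 0) by (rewrite vm_eq; ring).
  assert (Ha : a' <= m).
  { destruct (Rle_or_lt a' m) as [|Hgt]; auto. exfalso.
    destruct (Ha' ((a' - m) / 2) ltac:(lra)) as [r3 [Hr3 Hr3']].
    set (y := z + Rmin r3 (x + r1 - z) / 2).
    assert (0 < Rmin r3 (x + r1 - z)) by (apply Rmin_pos; lra).
    assert (Rmin r3 (x + r1 - z) <= r3) by apply Rmin_l. assert (Rmin r3 (x + r1 - z) <= x + r1 - z) by apply Rmin_r.
    assert (Vy : vm x m z < vm x m y).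
    { rewrite !vm_eq. specialize (Hr3' y ltac:(unfold y; lra)). apply Rabs_le_inv in Hr3'.
      assert (0 < y - z) by (unfold y; lra). nra. }
    apply (min_contra x m x y y0 z); try (unfold y, y0 in *; lra).
    intros t Ht. apply Hneg1. unfold y in Ht; lra. }
  assert (Hb : b' <= m).
  { destruct (Rle_or_lt b' m) as [|Hgt]; auto. exfalso.
    destruct (Hb' ((b' - m) / 2) ltac:(lra)) as [r3 [Hr3 Hr3']].
    set (y := z - Rmin r3 (z - x) / 2).
    assert (0 < Rmin r3 (z - x)) by (apply Rmin_pos; lra).
    assert (Rmin r3 (z - x) <= r3) by apply Rmin_l. assert (Rmin r3 (z - x) <= z - x) by apply Rmin_r.
    assert (Vy : vm x m y < vm x m z).
    { rewrite !vm_eq. specialize (Hr3' y ltac:(unfold y; lra)). apply Rabs_le_inv in Hr3'.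
      assert (0 < z - y) by (unfold y; lra). nra. }
    apply (min_contra x m x z y0 y); try (unfold y, y0 in *; lra).
    intros t Ht. apply Hneg1. lra. }
  split.
  - apply (below_neg z (u z) a' m); [apply RD_root; auto | apply Hneg1; lra | exact Ha].
  - apply (below_neg z (u z) b' m); [apply LD_root; auto | apply Hneg1; lra | exact Hb].
Qed.

Lemma prop_left x b : LD x b -> 0 < Hp H x b (u x) ->
  exists r, 0 < r /\ forall z, x - r < z < x -> forall a' b', RD z a' -> LD z b' ->
    0 < Hp H z a' (u z) /\ 0 < Hp H z b' (u z).
Proof.
  intros Hld Hpos.
  pose proof (LD_root x b Hld) as Hroot.
  destruct (ctn_pos _ _ (Hp_ctn_p x (u x) b) Hpos) as [d [Hd Hd']].
  set (m := b - d / 2).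
  assert (Hm : H x m (u x) < 0).
  { destruct (H_MVT_p x (u x) m b ltac:(unfold m; lra)) as [c [Hc E]].
    assert (0 < Hp H x c (u x)) by (apply Hd'; apply Rabs_def1; unfold m in Hc; lra).
    assert (0 < b - m) by (unfold m; lra). nra. }
  destruct (ctn_neg _ _ (H_ctn_u m x) Hm) as [r1 [Hr1 Hr1']].
  destruct (Hld ((b - m) / 2) ltac:(unfold m; lra)) as [r2 [Hr2 Hr2']].
  exists r1. split; auto. intros z Hz a' b' Ha' Hb'.
  assert (Hneg1 : forall t, x - r1 < t < x -> H t m (u t) < 0).
  { intros t Ht. apply Hr1'. apply Rabs_def1; lra. }
  set (y0 := x - Rmin r2 (x - z) / 2).
  assert (0 < Rmin r2 (x - z)) by (apply Rmin_pos; lra).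
  assert (Rmin r2 (x - z) <= r2) by apply Rmin_l. assert (Rmin r2 (x - z) <= x - z) by apply Rmin_r.
  assert (Vy0 : vm x m y0 < 0).
  { rewrite vm_eq. specialize (Hr2' y0 ltac:(unfold y0; lra)). apply Rabs_le_inv in Hr2'.
    assert (0 < x - y0) by (unfold y0; lra). unfold m in *. nra. }
  assert (Vx : vm x m x = 0) by (rewrite vm_eq; ring).
  assert (Hb : m <= b').
  { destruct (Rle_or_lt m b') as [|Hgt]; auto. exfalso.
    destruct (Hb' ((m - b') / 2) ltac:(lra)) as [r3 [Hr3 Hr3']].
    set (y := z - Rmin r3 (z - (x - r1)) / 2).
    assert (0 < Rmin r3 (z - (x - r1))) by (apply Rmin_pos; lra).
    assert (Rmin r3 (z - (x - r1)) <= r3) by apply Rmin_l. assert (Rmin r3 (z - (x - r1)) <= z - (x - r1)) by apply Rmin_r.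
    assert (Vy : vm x m z < vm x m y).
    { rewrite !vm_eq. specialize (Hr3' y ltac:(unfold y; lra)). apply Rabs_le_inv in Hr3'.
      assert (0 < z - y) by (unfold y; lra). nra. }
    apply (min_contra x m y x z y0); try (unfold y, y0 in *; lra).
    intros t Ht. apply Hneg1. unfold y in Ht; lra. }
  assert (Ha : m <= a').
  { destruct (Rle_or_lt m a') as [|Hgt]; auto. exfalso.
    destruct (Ha' ((m - a') / 2) ltac:(lra)) as [r3 [Hr3 Hr3']].
    set (y := z + Rmin r3 (x - z) / 2).
    assert (0 < Rmin r3 (x - z)) by (apply Rmin_pos; lra).
    assert (Rmin r3 (x - z) <= r3) by apply Rmin_l. assert (Rmin r3 (x - z) <= x - z) by apply Rmin_r.
    assert (Vy : vm x m y < vm x m z).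
    { rewrite !vm_eq. specialize (Hr3' y ltac:(unfold y; lra)). apply Rabs_le_inv in Hr3'.
      assert (0 < y - z) by (unfold y; lra). nra. }
    apply (min_contra x m z x y y0); try (unfold y, y0 in *; lra).
    intros t Ht. apply Hneg1. lra. }
  split.
  - apply (above_pos z (u z) a' m); [apply RD_root; auto | apply Hneg1; lra | exact Ha].
  - apply (above_pos z (u z) b' m); [apply LD_root; auto | apply Hneg1; lra | exact Hb].
Qed.

Lemma u_per y : u (y + 1) = u y.
Proof. apply (proj1 Husol). Qed.

Lemma RD_per x a : RD x a -> RD (x + 1) a.
Proof.
  intros Hr e He. destruct (Hr e He) as [r [Hr0 Hr']]. exists r. split; auto.
  intros y Hy. specialize (Hr' (y - 1) ltac:(lra)).
  replace y with ((y - 1) + 1) at 1 by ring. rewrite !u_per.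
  replace (y - (x + 1)) with (y - 1 - x) by ring. exact Hr'.
Qed.

Lemma LD_per x a : LD x a -> LD (x + 1) a.
Proof.
  intros Hr e He. destruct (Hr e He) as [r [Hr0 Hr']]. exists r. split; auto.
  intros y Hy. specialize (Hr' (y - 1) ltac:(lra)).
  replace y with ((y - 1) + 1) at 1 by ring. rewrite !u_per.
  replace (y - (x + 1)) with (y - 1 - x) by ring. replace (x + 1 - y) with (x - (y - 1)) by ring. exact Hr'.
Qed.

Lemma Hp_per x p w : Hp H (x + 1) p w = Hp H x p w.
Proof.
  unfold Hp, pd. apply Derive_ext. intros q. apply Hper.
Qed.

Definition Pneg z := forall a' b', RD z a' -> LD z b' -> Hp H z a' (u z) < 0 /\ Hp H z b' (u z) < 0.

Lemma Hp_LD_nz x b : LD x b -> Hp H x b (u x) <> 0.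
Proof.
  intros Hl. destruct (RD_exists x) as [a Ha].
  destruct (Hp_RD_LD x a b Ha Hl) as [[-> Hn]|[_ [_ Hp]]]; auto. lra.
Qed.

Lemma claimG x0 a : RD x0 a -> Hp H x0 a (u x0) < 0 -> forall z, x0 < z <= x0 + 1 -> Pneg z.
Proof.
  intros Hr Hn.
  set (S := fun y => x0 <= y <= x0 + 1 /\ forall z, x0 < z <= y -> Pneg z).
  assert (S0 : S x0). { split. lra. intros z Hz; lra. }
  destruct (completeness S) as [T [Hub Hlub]].
  { exists (x0 + 1). intros y [Hy _]. lra. }
  { exists x0; auto. }
  destruct (prop_right x0 a Hr Hn) as [r0 [Hr0 Hr0']].
  assert (HT1 : x0 < T).
  { assert (S (Rmin (x0 + r0/2) (x0 + 1))).
    { split. split. apply Rmin_glb; lra. apply Rmin_r.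
      intros z Hz. intros a' b' Ha' Hb'. apply (Hr0' z); auto.
      assert (Rmin (x0 + r0/2) (x0 + 1) <= x0 + r0/2) by apply Rmin_l. lra. }
    apply Hub in H0. assert (x0 < Rmin (x0 + r0/2) (x0 + 1)) by (apply Rmin_glb_lt; lra). lra. }
  assert (HT2 : T <= x0 + 1). { apply Hlub. intros y [Hy _]. lra. }
  assert (Hbelow : forall z, x0 < z < T -> Pneg z).
  { intros z Hz. apply NNPP. intros Hnp.
    assert (T <= z). { apply Hlub. intros y [Hy Hy']. destruct (Rle_or_lt y z); auto.
      exfalso. apply Hnp. apply Hy'. lra. }
    lra. }
  destruct (RD_exists T) as [aT HaT]. destruct (LD_exists T) as [bT HbT].
  assert (HbTn : Hp H T bT (u T) < 0).
  { destruct (Rlt_or_le (Hp H T bT (u T)) 0) as [|Hge]; auto. exfalso.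
    assert (Hpos : 0 < Hp H T bT (u T)). { pose proof (Hp_LD_nz T bT HbT). lra. }
    destruct (prop_left T bT HbT Hpos) as [r [Hr1 Hr1']].
    set (z := T - Rmin r (T - x0) / 2).
    assert (0 < Rmin r (T - x0)) by (apply Rmin_pos; lra).
    assert (Rmin r (T - x0) <= r) by apply Rmin_l. assert (Rmin r (T - x0) <= T - x0) by apply Rmin_r.
    destruct (RD_exists z) as [az Haz]. destruct (LD_exists z) as [bz Hbz].
    destruct (Hr1' z ltac:(unfold z; lra) az bz Haz Hbz) as [A _].
    destruct (Hbelow z ltac:(unfold z; lra) az bz Haz Hbz) as [A' _]. lra. }
  assert (HaT' : aT = bT).
  { destruct (Hp_RD_LD T aT bT HaT HbT) as [[E _]|[_ [_ Hp]]]; auto. lra. }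
  subst bT.
  assert (PT : Pneg T).
  { intros a' b' Ha' Hb'. rewrite <- (RD_unique T aT a' HaT Ha'), <- (LD_unique T aT b' HbT Hb').
    split; auto. }
  assert (ST : S T). { split. lra. intros z Hz. destruct (Req_dec z T) as [->|]; auto. apply Hbelow; lra. }
  assert (HT3 : T = x0 + 1).
  { destruct (Req_dec T (x0 + 1)); auto. exfalso.
    destruct (prop_right T aT HaT HbTn) as [r [Hr1 Hr1']].
    assert (S (Rmin (T + r/2) (x0 + 1))).
    { split. split. apply Rmin_glb; lra. apply Rmin_r.
      intros z Hz. destruct (Rle_or_lt z T). apply ST; lra.
      intros a' b' Ha' Hb'. apply (Hr1' z); auto.
      assert (Rmin (T + r/2) (x0 + 1) <= T + r/2) by apply Rmin_l. lra. }
    apply Hub in H1. assert (T < Rmin (T + r/2) (x0 + 1)) by (apply Rmin_glb_lt; lra). lra. }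
  intros z Hz. apply ST. lra.
Qed.

Lemma no_kink x a b : RD x a -> LD x b -> a = b.
Proof.
  intros Ha Hb. destruct (Hp_RD_LD x a b Ha Hb) as [[E _]|[Hlt [Hn Hp]]]; auto. exfalso.
  pose proof (claimG x a Ha Hn (x + 1) ltac:(lra) a b (RD_per x a Ha) (LD_per x b Hb)) as [_ K].
  rewrite Hp_per, u_per in K. lra.
Qed.

Lemma u_RD x : RD x (Derive u x).
Proof.
  destruct (RD_exists x) as [a Ha]. destruct (LD_exists x) as [b Hb].
  pose proof (no_kink x a b Ha Hb). subst.
  rewrite (is_derive_unique _ _ _ (RD_LD_derive x b Ha Hb)). auto.
Qed.

Lemma u_LD x : LD x (Derive u x).
Proof.
  destruct (RD_exists x) as [a Ha]. destruct (LD_exists x) as [b Hb].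
  pose proof (no_kink x a b Ha Hb). subst.
  rewrite (is_derive_unique _ _ _ (RD_LD_derive x b Ha Hb)). auto.
Qed.

Lemma u_is_derive x : is_derive u x (Derive u x).
Proof. apply RD_LD_derive. apply u_RD. apply u_LD. Qed.

Lemma u_root x : H x (Derive u x) (u x) = 0.
Proof. apply RD_root, u_RD. Qed.

Lemma B_nz x : Hp H x (Derive u x) (u x) <> 0.
Proof. apply HB. eexists. apply u_is_derive. Qed.

Definition Bu x := Hp H x (Derive u x) (u x).

Lemma Bu_per x : Bu (x + 1) = Bu x.
Proof.
  unfold Bu. rewrite Hp_per, u_per.
  rewrite (RD_unique (x + 1) (Derive u (x + 1)) (Derive u x)); auto.
  apply u_RD. apply RD_per, u_RD.
Qed.

Lemma Bu_neg_prop x0 : Bu x0 < 0 -> forall z, x0 < z <= x0 + 1 -> Bu z < 0.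
Proof.
  intros Hn z Hz. exact (proj1 (claimG x0 (Derive u x0) (u_RD x0) Hn z Hz _ _ (u_RD z) (u_LD z))).
Qed.

Lemma Bu_sign x : (forall z, x - 1/2 < z < x + 1/2 -> Bu z < 0) \/ (forall z, x - 1/2 <= z <= x + 1/2 -> 0 < Bu z).
Proof.
  destruct (Rlt_or_le (Bu (x - 1/2)) 0) as [Hn|Hp].
  - left. intros z Hz. apply (Bu_neg_prop (x - 1/2)); auto. lra.
  - right. assert (Hp' : 0 < Bu (x - 1/2)). { pose proof (B_nz (x - 1/2)). unfold Bu in *. lra. }
    intros z Hz. destruct (Rlt_or_le 0 (Bu z)) as [|Hle]; auto. exfalso.
    assert (Hzn : Bu z < 0). { pose proof (B_nz z). unfold Bu in *. lra. }
    assert (E : Bu (x + 1/2) = Bu (x - 1/2)). { rewrite <- (Bu_per (x - 1/2)). f_equal. lra. }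
    destruct (Req_dec z (x + 1/2)) as [->|Hne]. lra.
    pose proof (Bu_neg_prop z Hzn (x + 1/2) ltac:(lra)). lra.
Qed.

Lemma root_cont_neg x p : H x p (u x) = 0 -> Hp H x p (u x) < 0 ->
  forall e, 0 < e -> exists d, 0 < d /\ forall z q, Rabs (z - x) < d -> H z q (u z) = 0 -> Hp H z q (u z) < 0 ->
  Rabs (q - p) < e.
Proof.
  intros Hr Hn e He.
  destruct (ctn_neg _ _ (Hp_ctn_p x (u x) p) Hn) as [d0 [Hd0 Hd0']].
  set (e' := Rmin e d0 / 2).
  assert (0 < Rmin e d0) by (apply Rmin_pos; auto).
  assert (Rmin e d0 <= e) by apply Rmin_l. assert (Rmin e d0 <= d0) by apply Rmin_r.
  assert (He' : 0 < e') by (unfold e'; lra).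
  assert (A : H x (p + e') (u x) < 0).
  { destruct (H_MVT_p x (u x) p (p + e') ltac:(lra)) as [c [Hc E]].
    assert (Hp H x c (u x) < 0) by (apply Hd0'; apply Rabs_def1; unfold e' in *; lra). nra. }
  assert (B : 0 < H x (p - e') (u x)).
  { destruct (H_MVT_p x (u x) (p - e') p ltac:(lra)) as [c [Hc E]].
    assert (Hp H x c (u x) < 0) by (apply Hd0'; apply Rabs_def1; unfold e' in *; lra). nra. }
  destruct (ctn_neg _ _ (H_ctn_u (p + e') x) A) as [d1 [Hd1 Hd1']].
  destruct (ctn_pos _ _ (H_ctn_u (p - e') x) B) as [d2 [Hd2 Hd2']].
  exists (Rmin d1 d2). split. apply Rmin_pos; auto.
  intros z q Hz Hq Hqn.
  assert (Rmin d1 d2 <= d1) by apply Rmin_l. assert (Rmin d1 d2 <= d2) by apply Rmin_r.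
  specialize (Hd1' z ltac:(lra)). specialize (Hd2' z ltac:(lra)).
  destruct (Rlt_or_le q (p + e')) as [Hq1|Hq1].
  - destruct (Rlt_or_le (p - e') q) as [Hq2|Hq2].
    + apply Rabs_def1; unfold e' in *; lra.
    + exfalso. pose proof (H_conv z (u z) q (p + e') (p - e') ltac:(lra)) as K.
      rewrite Hq, Rmax_left in K by lra. lra.
  - exfalso. destruct (Req_dec q (p + e')) as [Heq|Hne]. rewrite Heq in Hq. lra.
    destruct (H_MVT_p z (u z) (p + e') q ltac:(lra)) as [c [Hc E]].
    pose proof (Hp_strict_mono z (u z) c q ltac:(lra)). nra.
Qed.

Lemma root_cont_pos x p : H x p (u x) = 0 -> 0 < Hp H x p (u x) ->
  forall e, 0 < e -> exists d, 0 < d /\ forall z q, Rabs (z - x) < d -> H z q (u z) = 0 -> 0 < Hp H z q (u z) ->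
  Rabs (q - p) < e.
Proof.
  intros Hr Hn e He.
  destruct (ctn_pos _ _ (Hp_ctn_p x (u x) p) Hn) as [d0 [Hd0 Hd0']].
  set (e' := Rmin e d0 / 2).
  assert (0 < Rmin e d0) by (apply Rmin_pos; auto).
  assert (Rmin e d0 <= e) by apply Rmin_l. assert (Rmin e d0 <= d0) by apply Rmin_r.
  assert (He' : 0 < e') by (unfold e'; lra).
  assert (A : 0 < H x (p + e') (u x)).
  { destruct (H_MVT_p x (u x) p (p + e') ltac:(lra)) as [c [Hc E]].
    assert (0 < Hp H x c (u x)) by (apply Hd0'; apply Rabs_def1; unfold e' in *; lra). nra. }
  assert (B : H x (p - e') (u x) < 0).
  { destruct (H_MVT_p x (u x) (p - e') p ltac:(lra)) as [c [Hc E]].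
    assert (0 < Hp H x c (u x)) by (apply Hd0'; apply Rabs_def1; unfold e' in *; lra). nra. }
  destruct (ctn_pos _ _ (H_ctn_u (p + e') x) A) as [d1 [Hd1 Hd1']].
  destruct (ctn_neg _ _ (H_ctn_u (p - e') x) B) as [d2 [Hd2 Hd2']].
  exists (Rmin d1 d2). split. apply Rmin_pos; auto.
  intros z q Hz Hq Hqn.
  assert (Rmin d1 d2 <= d1) by apply Rmin_l. assert (Rmin d1 d2 <= d2) by apply Rmin_r.
  specialize (Hd1' z ltac:(lra)). specialize (Hd2' z ltac:(lra)).
  destruct (Rlt_or_le (p - e') q) as [Hq1|Hq1].
  - destruct (Rlt_or_le q (p + e')) as [Hq2|Hq2].
    + apply Rabs_def1; unfold e' in *; lra.
    + exfalso. pose proof (H_conv z (u z) (p - e') q (p + e') ltac:(lra)) as K.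
      rewrite Hq, Rmax_right in K by lra. lra.
  - exfalso. destruct (Req_dec q (p - e')) as [Heq|Hne]. rewrite Heq in Hq. lra.
    destruct (H_MVT_p z (u z) q (p - e') ltac:(lra)) as [c [Hc E]].
    pose proof (Hp_strict_mono z (u z) q c ltac:(lra)). nra.
Qed.

Lemma Du_ctn x : ctn (Derive u) x.
Proof.
  intros e He.
  destruct (Bu_sign x) as [Hn|Hp].
  - assert (Bx : Bu x < 0) by (apply Hn; lra).
    destruct (root_cont_neg x (Derive u x) (u_root x) Bx e He) as [d [Hd Hd']].
    exists (Rmin d (1/2)). split. apply Rmin_pos; lra.
    intros s Hs. assert (Rmin d (1/2) <= d) by apply Rmin_l. assert (Rmin d (1/2) <= 1/2) by apply Rmin_r.
    apply (Hd' s). lra. apply u_root. apply Rabs_def2 in Hs. apply Hn. lra.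
  - assert (Bx : 0 < Bu x) by (apply Hp; lra).
    destruct (root_cont_pos x (Derive u x) (u_root x) Bx e He) as [d [Hd Hd']].
    exists (Rmin d (1/2)). split. apply Rmin_pos; lra.
    intros s Hs. assert (Rmin d (1/2) <= d) by apply Rmin_l. assert (Rmin d (1/2) <= 1/2) by apply Rmin_r.
    apply (Hd' s). lra. apply u_root. apply Rabs_def2 in Hs. apply Hp. lra.
Qed.

Definition gr (t : R) : R := (muf H u - Hu H t (Derive u t) (u t)) / Bf H u t.

Lemma Bu_ctn x : ctn Bu x.
Proof. apply (cont3_comp (Hp H) (fun s => s) (Derive u) u); auto using Hp_cont3, ctn_id, Du_ctn, u_ctn. Qed.
Lemma Huu_ctn x : ctn (fun t => Hu H t (Derive u t) (u t)) x.
Proof. apply (cont3_comp (Hu H) (fun s => s) (Derive u) u); auto using Hu_cont3, ctn_id, Du_ctn, u_ctn. Qed.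

Lemma gr_cont x : continuous gr x.
Proof.
  apply continuity_pt_filterlim.
  apply (continuity_pt_div (fun t => muf H u - Hu H t (Derive u t) (u t)) Bu).
  apply continuity_pt_minus. apply continuity_pt_const. intros a b; auto.
  apply ctn_continuity_pt, Huu_ctn.
  apply ctn_continuity_pt, Bu_ctn. apply B_nz.
Qed.

Lemma rho_deriv x : is_derive (rhof H u) x (rhof H u x * gr x).
Proof.
  unfold rhof. change (is_derive (fun x => exp (RInt gr 0 x)) x (exp (RInt gr 0 x) * gr x)).
  assert (D : is_derive (fun y => RInt gr 0 y) x (gr x)).
  { apply (is_derive_RInt gr (fun y => RInt gr 0 y) 0 x).
    apply filter_forall. intros y. apply (RInt_correct gr 0 y).
    apply ex_RInt_continuous. intros; apply gr_cont.
    apply gr_cont. }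
  pose proof (is_derive_comp exp (fun y => RInt gr 0 y) x (exp (RInt gr 0 x)) (gr x)) as K.
  assert (E : is_derive exp (RInt gr 0 x) (exp (RInt gr 0 x))).
  { apply is_derive_Reals. apply derivable_pt_lim_exp. }
  specialize (K E D).
  unfold scal in K; simpl in K; unfold mult in K; simpl in K.
  replace (exp (RInt gr 0 x) * gr x) with (gr x * exp (RInt gr 0 x)) by ring.
  exact K.
Qed.

Lemma rho_pos x : 0 < rhof H u x.
Proof. apply exp_pos. Qed.

Lemma rho_ctn x : ctn (rhof H u) x.
Proof. apply continuous_ctn. apply (@ex_derive_continuous R_AbsRing R_NormedModule (rhof H u) x). eexists. apply rho_deriv. Qed.

Lemma rhod_ctn x : ctn (fun y => rhof H u y * gr y) x.
Proof.
  apply continuous_ctn. apply (continuous_mult (rhof H u) gr).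
  apply (@ex_derive_continuous R_AbsRing R_NormedModule (rhof H u) x). eexists. apply rho_deriv.
  apply gr_cont.
Qed.

Lemma rhod_eq x : rhof H u x * gr x * Bu x = rhof H u x * (muf H u - Hu H x (Derive u x) (u x)).
Proof.
  unfold gr, Bf. fold (Bu x). field. apply B_nz.
Qed.

Lemma ctn_abs f x : ctn f x -> ctn (fun y => Rabs (f y)) x.
Proof.
  intros Hf e He. destruct (Hf e He) as [d [Hd Hd']]. exists d. split; auto.
  intros s Hs. eapply Rle_lt_trans. apply Rabs_triang_inv2. auto.
Qed.

Lemma H_MVT_u2 x q v1 v2 : exists c, Rabs (c - v1) <= Rabs (v2 - v1) /\
  H x q v2 - H x q v1 = Hu H x q c * (v2 - v1).
Proof.
  destruct (MVT_gen (fun v => H x q v) v1 v2 (fun v => Hu H x q v)) as [c [Hc E]].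
  intros y _. apply H_deriv_u.
  intros y _. apply derivable_continuous_pt. exists (Hu H x q y). apply is_derive_Reals, H_deriv_u.
  exists c. split; auto.
  revert Hc. unfold Rmin, Rmax. destruct (Rle_dec v1 v2); intros Hc; apply Rabs_le; 
    [rewrite Rabs_right by lra| rewrite Rabs_left by lra]; lra.
Qed.

Lemma H_MVT_p2 x w q1 q2 : exists c, Rabs (c - q1) <= Rabs (q2 - q1) /\
  H x q2 w - H x q1 w = Hp H x c w * (q2 - q1).
Proof.
  destruct (MVT_gen (fun q => H x q w) q1 q2 (fun q => Hp H x q w)) as [c [Hc E]].
  intros y _. apply H_deriv_p.
  intros y _. apply derivable_continuous_pt. exists (Hp H x y w). apply is_derive_Reals, H_deriv_p.
  exists c. split; auto.
  revert Hc. unfold Rmin, Rmax. destruct (Rle_dec q1 q2); intros Hc; apply Rabs_le; 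
    [rewrite Rabs_right by lra| rewrite Rabs_left by lra]; lra.
Qed.

Definition Qu (eta k x : R) : Prop := 0 < k /\ forall q v, Rabs (q - Derive u x) <= / k -> Rabs (v - u x) <= / k ->
  Rabs (Hu H x q v - Hu H x (Derive u x) (u x)) <= eta /\ Rabs (Hp H x q v - Hp H x (Derive u x) (u x)) <= eta.

Lemma unif_cont eta : 0 < eta -> exists k, forall x, 0 <= x <= 1 -> Qu eta k x.
Proof.
  intros He. apply cover. lra.
  - intros k k' y Hk [Hk0 Hq]. split. lra. intros q v Hq1 Hq2. apply Hq.
    eapply Rle_trans. apply Hq1. apply Rinv_le_contravar; lra.
    eapply Rle_trans. apply Hq2. apply Rinv_le_contravar; lra.
  - intros x1 _.
    destruct (Hu_cont3 x1 (Derive u x1) (u x1) (eta / 2) ltac:(lra)) as [d1 [Hd1 Hd1']].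
    destruct (Hp_cont3 x1 (Derive u x1) (u x1) (eta / 2) ltac:(lra)) as [d2 [Hd2 Hd2']].
    set (d := Rmin d1 d2).
    assert (Hd : 0 < d) by (apply Rmin_pos; auto).
    assert (d <= d1) by apply Rmin_l. assert (d <= d2) by apply Rmin_r.
    destruct (Du_ctn x1 (d / 2) ltac:(lra)) as [r1 [Hr1 Hr1']].
    destruct (u_ctn x1 (d / 2) ltac:(lra)) as [r2 [Hr2 Hr2']].
    exists (2 / d), (Rmin d (Rmin r1 r2)). split. repeat apply Rmin_pos; auto.
    intros x Hx.
    assert (Rmin d (Rmin r1 r2) <= d) by apply Rmin_l.
    assert (Rmin d (Rmin r1 r2) <= Rmin r1 r2) by apply Rmin_r.
    assert (Rmin r1 r2 <= r1) by apply Rmin_l. assert (Rmin r1 r2 <= r2) by apply Rmin_r.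
    specialize (Hr1' x ltac:(lra)). specialize (Hr2' x ltac:(lra)).
    assert (Hk : 0 < 2 / d) by (apply Rdiv_lt_0_compat; lra).
    split; auto. intros q v Hq Hv.
    replace (/ (2 / d)) with (d / 2) in Hq, Hv by (field; lra).
    assert (Hq' : Rabs (q - Derive u x1) < d).
    { replace (q - Derive u x1) with ((q - Derive u x) + (Derive u x - Derive u x1)) by ring.
      eapply Rle_lt_trans. apply Rabs_triang. lra. }
    assert (Hv' : Rabs (v - u x1) < d).
    { replace (v - u x1) with ((v - u x) + (u x - u x1)) by ring.
      eapply Rle_lt_trans. apply Rabs_triang. lra. }
    assert (Hx' : Rabs (x - x1) < d) by lra.
    split.
    + pose proof (Hd1' x q v ltac:(lra) ltac:(lra) ltac:(lra)) as A.
      pose proof (Hd1' x (Derive u x) (u x) ltac:(lra) ltac:(lra) ltac:(lra)) as B.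
      replace (Hu H x q v - Hu H x (Derive u x) (u x)) with
        ((Hu H x q v - Hu H x1 (Derive u x1) (u x1)) - (Hu H x (Derive u x) (u x) - Hu H x1 (Derive u x1) (u x1))) by ring.
      eapply Rle_trans. apply Rabs_triang. rewrite Rabs_Ropp. lra.
    + pose proof (Hd2' x q v ltac:(lra) ltac:(lra) ltac:(lra)) as A.
      pose proof (Hd2' x (Derive u x) (u x) ltac:(lra) ltac:(lra) ltac:(lra)) as B.
      replace (Hp H x q v - Hp H x (Derive u x) (u x)) with
        ((Hp H x q v - Hp H x1 (Derive u x1) (u x1)) - (Hp H x (Derive u x) (u x) - Hp H x1 (Derive u x1) (u x1))) by ring.
      eapply Rle_trans. apply Rabs_triang. rewrite Rabs_Ropp. lra.
Qed.

Lemma final_est Th : muf H u < Th -> exists eps0, 0 < eps0 /\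
  forall x, 0 <= x <= 1 -> forall dl, Rabs dl <= eps0 ->
  exists beta, 0 < beta /\
   Th * dl * rhof H u x + H x (Derive u x - dl * (rhof H u x * gr x)) (u x - dl * rhof H u x) = dl * beta.
Proof.
  intros Hth. set (mu := muf H u) in *.
  destruct (continuity_ab_min (rhof H u) 0 1 ltac:(lra)) as [xm [Hxm _]].
  intros c _. apply ctn_continuity_pt, rho_ctn.
  destruct (continuity_ab_maj (rhof H u) 0 1 ltac:(lra)) as [xM [HxM _]].
  intros c _. apply ctn_continuity_pt, rho_ctn.
  destruct (continuity_ab_maj (fun y => Rabs (rhof H u y * gr y)) 0 1 ltac:(lra)) as [x1 [Hx1 _]].
  intros c _. apply ctn_continuity_pt, ctn_abs, rhod_ctn.
  set (rm := rhof H u xm). set (M0 := rhof H u xM). set (M1 := Rabs (rhof H u x1 * gr x1)).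
  assert (Hrm : 0 < rm) by apply rho_pos.
  assert (HM1 : 0 <= M1) by apply Rabs_pos.
  assert (HM0 : 0 < M0) by apply rho_pos.
  set (eta := (Th - mu) * rm / (2 * (M0 + M1 + 1))).
  assert (Heta : 0 < eta). { unfold eta. apply Rdiv_lt_0_compat. nra. lra. }
  assert (Heta2 : eta * (M0 + M1) <= (Th - mu) * rm / 2).
  { unfold eta. apply Rmult_le_reg_r with (2 * (M0 + M1 + 1)). lra.
    replace ((Th - mu) * rm / (2 * (M0 + M1 + 1)) * (M0 + M1) * (2 * (M0 + M1 + 1)))
      with ((Th - mu) * rm * (M0 + M1)) by (field; lra).
    replace ((Th - mu) * rm / 2 * (2 * (M0 + M1 + 1))) with ((Th - mu) * rm * (M0 + M1 + 1)) by field.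
    assert (0 < (Th - mu) * rm) by nra. nra. }
  destruct (unif_cont eta Heta) as [k Hk].
  assert (Hk0 : 0 < k) by (apply (Hk 0 ltac:(lra))).
  set (eps0 := / (k * (M0 + M1 + 1))).
  assert (He0 : 0 < eps0) by (unfold eps0; apply Rinv_0_lt_compat; nra).
  exists eps0. split; auto.
  intros x Hx dl Hdl.
  set (p := Derive u x). set (w := u x). set (r := rhof H u x). set (r' := rhof H u x * gr x).
  assert (Hr1 : rm <= r) by (apply Hxm; auto).
  assert (Hr2 : r <= M0) by (apply HxM; auto).
  assert (Hr3 : Rabs r' <= M1) by (apply (Hx1 x); auto).
  assert (Hr0 : 0 < r) by apply rho_pos.
  assert (Hepsk : eps0 * (M0 + M1 + 1) = / k) by (unfold eps0; field; nra).
  assert (Hb : Rabs (dl * r) <= / k).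
  { rewrite Rabs_mult, (Rabs_right r) by lra. 
    assert (Rabs dl * r <= eps0 * (M0 + M1 + 1)). { pose proof (Rabs_pos dl). nra. } lra. }
  assert (Ha : Rabs (dl * r') <= / k).
  { rewrite Rabs_mult.
    assert (Rabs dl * Rabs r' <= eps0 * (M0 + M1 + 1)). { pose proof (Rabs_pos dl). pose proof (Rabs_pos r'). nra. } lra. }
  destruct (H_MVT_u2 x (p - dl * r') w (w - dl * r)) as [c1 [Hc1 E1]].
  destruct (H_MVT_p2 x w p (p - dl * r')) as [c2 [Hc2 E2]].
  replace (w - dl * r - w) with (- (dl * r)) in * by ring.
  replace (p - dl * r' - p) with (- (dl * r')) in * by ring.
  rewrite Rabs_Ropp in Hc1, Hc2.
  destruct (Hk x Hx) as [_ Hq].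
  destruct (Hq (p - dl * r') c1) as [A1 _].
  { replace (p - dl * r' - Derive u x) with (- (dl * r')) by (unfold p; ring). rewrite Rabs_Ropp; auto. }
  { fold w. lra. }
  destruct (Hq c2 w) as [_ A2].
  { fold p. lra. }
  { unfold w. rewrite Rminus_eq_0, Rabs_R0. left. apply Rinv_0_lt_compat; auto. }
  fold p w in A1, A2.
  assert (Root : H x p w = 0) by apply u_root.
  assert (Rel : r' * Hp H x p w = r * (mu - Hu H x p w)).
  { pose proof (rhod_eq x) as K. unfold Bu in K. unfold r', mu, r, p, w. lra. }
  set (beta := Th * r - r * Hu H x (p - dl * r') c1 - r' * Hp H x c2 w).
  exists beta. split.
  - assert (beta = r * (Th - mu) + r * (Hu H x p w - Hu H x (p - dl * r') c1)
                  + r' * (Hp H x p w - Hp H x c2 w)).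
    { unfold beta. replace (r * (Th - mu)) with (Th * r - r * mu) by ring. nra. }
    apply Rabs_le_inv in A1. apply Rabs_le_inv in A2.
    assert (T1 : Rabs (r * (Hu H x p w - Hu H x (p - dl * r') c1)) <= M0 * eta).
    { rewrite Rabs_mult, (Rabs_right r) by lra.
      assert (Rabs (Hu H x p w - Hu H x (p - dl * r') c1) <= eta).
      { rewrite <- Rabs_Ropp. replace (- (Hu H x p w - Hu H x (p - dl * r') c1)) with
          (Hu H x (p - dl * r') c1 - Hu H x p w) by ring. apply Rabs_le; lra. }
      pose proof (Rabs_pos (Hu H x p w - Hu H x (p - dl * r') c1)). nra. }
    assert (T2 : Rabs (r' * (Hp H x p w - Hp H x c2 w)) <= M1 * eta).
    { rewrite Rabs_mult.
      assert (Rabs (Hp H x p w - Hp H x c2 w) <= eta).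
      { rewrite <- Rabs_Ropp. replace (- (Hp H x p w - Hp H x c2 w)) with
          (Hp H x c2 w - Hp H x p w) by ring. apply Rabs_le; lra. }
      pose proof (Rabs_pos (Hp H x p w - Hp H x c2 w)). pose proof (Rabs_pos r'). nra. }
    apply Rabs_le_inv in T1. apply Rabs_le_inv in T2.
    assert (rm * (Th - mu) <= r * (Th - mu)) by nra.
    nra.
  - change (Th * dl * r + H x (p - dl * r') (w - dl * r) = dl * beta). unfold beta.
    assert (E3 : H x (p - dl * r') (w - dl * r) = H x (p - dl * r') (w - dl * r) - H x (p - dl * r') w
               + (H x (p - dl * r') w - H x p w)) by (rewrite Root; ring).
    rewrite E3, E1, E2. ring.
Qed.

Lemma wf_dt Th eps x t : Derive (fun s => wf H u Th eps x s) t = Th * (eps * exp (- Th * t)) * rhof H u x.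
Proof.
  apply is_derive_unique. unfold wf. auto_derive. auto. ring.
Qed.

Lemma wf_dx Th eps x t : Derive (fun y => wf H u Th eps y t) x =
  Derive u x - (eps * exp (- Th * t)) * (rhof H u x * gr x).
Proof.
  apply is_derive_unique. unfold wf.
  auto_derive.
  - split. eexists; apply u_is_derive. split; auto. eexists; apply rho_deriv.
  - replace (Derive (fun x0 : R => rhof H u x0) x) with (rhof H u x * gr x).
    replace (Derive (fun x0 : R => u x0) x) with (Derive u x) by reflexivity. ring.
    symmetry. apply is_derive_unique. apply rho_deriv.
Qed.

End Main.

Lemma delta_bound eps0 eps Th t : 0 < eps0 -> 0 < Rabs eps -> Th < 0 ->
  t <= (ln eps0 - ln (Rabs eps)) / (- Th) -> Rabs eps * exp (- Th * t) <= eps0.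
Proof.
  intros He0 He Hth Ht.
  assert (A : - Th * t <= ln eps0 - ln (Rabs eps)).
  { apply Rmult_le_compat_l with (r := - Th) in Ht. 2: lra.
    replace (- Th * ((ln eps0 - ln (Rabs eps)) / - Th)) with (ln eps0 - ln (Rabs eps)) in Ht by (field; lra).
    lra. }
  assert (B : exp (- Th * t) <= exp (ln eps0 - ln (Rabs eps))).
  { destruct A as [A|A]. left. apply exp_increasing; auto. rewrite A. lra. }
  unfold Rminus in B. rewrite exp_plus, exp_Ropp, !exp_ln in B by auto.
  apply Rmult_le_compat_l with (r := Rabs eps) in B. 2: lra.
  replace (Rabs eps * (eps0 * / Rabs eps)) with eps0 in B by (field; lra). exact B.
Qed.

Theorem lemma2p4 (H : R -> R -> R -> R) (u0 : R -> R) :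
  smooth3 H -> periodic1_3 H ->
  (forall x p u, 0 < Hpp H x p u) ->
  superlinear H ->
  (exists kappa, 0 < kappa /\ forall x p u, Rabs (Hu H x p u) <= kappa) ->
  visc_sol H u0 ->
  (forall x, ex_derive u0 x -> Hp H x (Derive u0 x) (u0 x) <> 0) ->
  muf H u0 < 0 ->
  forall Theta, muf H u0 < Theta < 0 ->
  exists eps0, 0 < eps0 /\
    (forall eps, 0 < eps <= eps0 ->
       forall x t, 0 <= x <= 1 ->
         0 <= t <= (ln eps0 - ln (Rabs eps)) / (- Theta) ->
         0 <= Derive (fun s => wf H u0 Theta eps x s) t
              + H x (Derive (fun y => wf H u0 Theta eps y t) x)
                    (wf H u0 Theta eps x t)) /\
    (forall eps, - eps0 <= eps < 0 ->
       forall x t, 0 <= x <= 1 ->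
         0 <= t <= (ln eps0 - ln (Rabs eps)) / (- Theta) ->
         Derive (fun s => wf H u0 Theta eps x s) t
              + H x (Derive (fun y => wf H u0 Theta eps y t) x)
                    (wf H u0 Theta eps x t) <= 0).
Proof.
  intros Hsm Hper Hconv Hsl _ Husol HB _ Th [Hth1 Hth2].
  destruct (final_est H u0 Hsm Hper Hconv Hsl Husol HB Th Hth1) as [eps0 [He0 Hf]].
  assert (Key : forall eps x t, eps <> 0 -> 0 <= x <= 1 -> t <= (ln eps0 - ln (Rabs eps)) / (- Th) ->
     exists beta, 0 < beta /\
     Derive (fun s => wf H u0 Th eps x s) t + H x (Derive (fun y => wf H u0 Th eps y t) x) (wf H u0 Th eps x t)
     = (eps * exp (- Th * t)) * beta).
  { intros eps x t Hne Hx Ht.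
    set (dl := eps * exp (- Th * t)).
    assert (Hdl : Rabs dl <= eps0).
    { unfold dl. rewrite Rabs_mult, (Rabs_right (exp _)) by (left; apply exp_pos).
      apply delta_bound; auto. apply Rabs_pos_lt; auto. }
    destruct (Hf x Hx dl Hdl) as [beta [Hb E]].
    exists beta. split; auto.
    rewrite (wf_dt H u0), (wf_dx H u0 Hsm Hper Hconv Hsl Husol HB). fold dl.
    unfold wf. rewrite <- E. f_equal. f_equal. unfold dl. ring. }
  exists eps0. split; auto. split.
  - intros eps He x t Hx Ht.
    destruct (Key eps x t ltac:(lra) Hx ltac:(lra)) as [beta [Hb E]]. rewrite E.
    pose proof (exp_pos (- Th * t)). apply Rmult_le_pos; [apply Rmult_le_pos|]; lra.
  - intros eps He x t Hx Ht.
    destruct (Key eps x t ltac:(lra) Hx ltac:(lra)) as [beta [Hb E]]. rewrite E.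
    pose proof (exp_pos (- Th * t)).
    assert (0 <= (- eps * exp (- Th * t)) * beta) by (apply Rmult_le_pos; [apply Rmult_le_pos|]; lra).
    lra.
Qed.
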